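(* Let $a>0$. Then $$\int_0^1 g_a(x)\,dx=1-\sum_{n\ge1}\frac{\Gamma(an+1)\,\Gamma(an+n-1)}{\Gamma(an+n+2)\,\Gamma(an)}=1-\frac{a}{2(a+1)}-\frac{a\pi}{2(a+1)^2}\cot\frac{a\pi}{a+1}.$$
   Context: For $a>0$ let $\phi_a(x)=x^a-x^{a+1}$ on $[0,1]$, strictly increasing on $[0,x_0]$ and strictly decreasing on $[x_0,1]$ with $x_0=a/(a+1)$. Let $r_a$ be the restriction of $\phi_a$ to $[x_0,1]$, and define $g_a(x)=r_a^{-1}(\phi_a(x))$ for $0\le x\le 1$. *)

(* Defs.v *)
From Stdlib Require Import Reals ClassicalEpsilon.
From Coquelicot Require Import Coquelicot.
Open Scope R_scope.

(* real power x^y for x >= 0, with the convention 0^y = 0 (y > 0 in all uses) *)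
Definition rpow (x y : R) : R := if Rle_dec x 0 then 0 else Rpower x y.

Definition Gamma (s : R) : R :=
  RInt_gen (fun t => rpow t (s - 1) * exp (- t)) (at_right 0) (Rbar_locally p_infty).

Definition cot (x : R) : R := cos x / sin x.

Definition phi (a x : R) : R := rpow x a - rpow x (a + 1).

Definition x0 (a : R) : R := a / (a + 1).

(* r_a^{-1}(v): the (unique) y in [x_0, 1] with phi_a y = v *)
Definition r_inv (a v : R) : R :=
  epsilon (inhabits 0) (fun y => x0 a <= y <= 1 /\ phi a y = v).

Definition g (a x : R) : R := r_inv a (phi a x).

Definition term (a : R) (n : nat) : R :=
  let an := a * INR n in
  Gamma (an + 1) * Gamma (an + INR n - 1) / (Gamma (an + INR n + 2) * Gamma an).

(* Main.v *)
Require Import Defs.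
From Stdlib Require Import Reals Lra Lia Psatz ClassicalEpsilon ZArith.
From Coquelicot Require Import Coquelicot.
Open Scope R_scope.


Lemma rpow_pos (t y : R) : 0 < t -> rpow t y = Rpower t y.
Proof. intros Ht. unfold rpow. destruct (Rle_dec t 0); [lra|reflexivity]. Qed.

Lemma Rpower_pos (t y : R) : 0 < Rpower t y.
Proof. unfold Rpower. apply exp_pos. Qed.

Lemma pow_le_exp (m : nat) (t : R) : 0 <= t ->
  t ^ m <= INR (Factorial.fact m) * 2 ^ m * exp (t / 2).
Proof.
  intros Ht.
  assert (H := exp_ge_taylor (t/2) m ltac:(lra)).
  assert (Hl : (t/2) ^ m / INR (Factorial.fact m) <= exp (t/2)).
  { eapply Rle_trans; [|exact H]. destruct m as [|k].
    - simpl. lra.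
    - set (f := fun k0 : nat => (t / 2) ^ k0 / INR (Factorial.fact k0)).
      change (sum_f_R0 f (S k)) with (sum_f_R0 f k + f (S k)).
      assert (0 <= sum_f_R0 f k).
      { apply cond_pos_sum. intros n. unfold f, Rdiv. apply Rmult_le_pos. apply pow_le; lra.
        apply Rlt_le, Rinv_0_lt_compat, lt_0_INR, Factorial.lt_O_fact. }
      unfold f at 2. lra. }
  assert (Hf : 0 < INR (Factorial.fact m)) by apply lt_0_INR, Factorial.lt_O_fact.
  unfold Rdiv in Hl. rewrite Rpow_mult_distr in Hl.
  assert (Hp : 0 < 2 ^ m) by (apply pow_lt; lra).
  assert (E : t ^ m = INR (Factorial.fact m) * 2 ^ m * (t ^ m * (/ 2) ^ m * / INR (Factorial.fact m))).
  { rewrite pow_inv. field. split; lra. }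
  rewrite E. apply Rmult_le_compat_l. nra. exact Hl.
Qed.

Lemma rpow_le_exp (y : R) : exists C, 0 < C /\ forall t, 1 <= t -> Rpower t y <= C * exp (t/2).
Proof.
  destruct (archimed y) as [Hu _].
  set (m := Z.to_nat (Z.abs (up y))).
  assert (Hm : y <= INR m).
  { unfold m. rewrite INR_IZR_INZ, Z2Nat.id by apply Z.abs_nonneg.
    rewrite abs_IZR. pose proof (Rle_abs (IZR (up y))). lra. }
  exists (INR (Factorial.fact m) * 2 ^ m). split.
  { apply Rmult_lt_0_compat. apply lt_0_INR, Factorial.lt_O_fact. apply pow_lt; lra. }
  intros t Ht.
  eapply Rle_trans. apply Rle_Rpower with (m := INR m); lra.
  rewrite Rpower_pow by lra. apply pow_le_exp. lra.
Qed.

Lemma ex_RInt_pos (f : R -> R) : (forall t, 0 < t -> continuous f t) ->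
  forall a b, 0 < a -> 0 < b -> ex_RInt f a b.
Proof.
  intros Hc a b Ha Hb. apply (ex_RInt_continuous (V := R_CompleteNormedModule)). intros z Hz. apply Hc.
  destruct Hz as [Hz _]. eapply Rlt_le_trans; [|exact Hz].
  unfold Rmin; destruct (Rle_dec a b); lra.
Qed.

Lemma RInt_mono_nonneg (f : R -> R) : (forall t, 0 < t -> continuous f t) ->
  (forall t, 0 < t -> 0 <= f t) ->
  forall a c d b, 0 < a -> a <= c -> c <= d -> d <= b -> RInt f c d <= RInt f a b.
Proof.
  intros Hc Hp a c d b Ha H1 H2 H3.
  assert (E1 := RInt_Chasles f a c b (ex_RInt_pos f Hc a c ltac:(lra) ltac:(lra))
                               (ex_RInt_pos f Hc c b ltac:(lra) ltac:(lra))).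
  assert (E2 := RInt_Chasles f c d b (ex_RInt_pos f Hc c d ltac:(lra) ltac:(lra))
                               (ex_RInt_pos f Hc d b ltac:(lra) ltac:(lra))).
  unfold plus in E1, E2; simpl in E1, E2.
  assert (0 <= RInt f a c).
  { apply RInt_ge_0; [lra| apply ex_RInt_pos; auto; lra| intros; apply Hp; lra]. }
  assert (0 <= RInt f d b).
  { apply RInt_ge_0; [lra| apply ex_RInt_pos; auto; lra| intros; apply Hp; lra]. }
  lra.
Qed.

Lemma improper_exists (f : R -> R) (B : R) :
  (forall t, 0 < t -> continuous f t) -> (forall t, 0 < t -> 0 <= f t) ->
  (forall e M, 0 < e -> e <= M -> RInt f e M <= B) ->
  exists L, is_RInt_gen f (at_right 0) (Rbar_locally p_infty) L /\
     (forall e M, 0 < e -> e <= M -> RInt f e M <= L).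
Proof.
  intros Hc Hp HB.
  set (E := fun x => exists e M, 0 < e /\ e <= M /\ x = RInt f e M).
  destruct (completeness E) as [L [HL1 HL2]].
  { exists B. intros x (e & M & He & HeM & ->). auto. }
  { exists (RInt f 1 1). exists 1, 1. repeat split; lra. }
  exists L. split.
  2:{ intros e M He HeM. apply HL1. exists e, M. auto. }
  intros P [eps HP].
  assert (Hex : exists e0 M0, 0 < e0 /\ e0 <= M0 /\ L - eps < RInt f e0 M0).
  { apply Classical_Prop.NNPP. intros Hn. 
    assert (L <= L - eps).
    { apply HL2. intros x (e & M & He & HeM & ->).
      apply Rnot_lt_le. intros Hlt. apply Hn. exists e, M. auto. }
    destruct eps; simpl in *; lra. }
  destruct Hex as (e0 & M0 & He0 & HeM0 & Hlt).
  apply Filter_prod with (fun x => 0 < x < e0) (fun y => M0 < y).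
  - exists (mkposreal e0 He0). intros y Hy Hy0. split; auto.
    unfold ball in Hy; simpl in Hy; unfold AbsRing_ball, abs, minus, plus, opp in Hy; simpl in Hy.
    rewrite Ropp_0, Rplus_0_r in Hy. apply Rabs_def2 in Hy. lra.
  - exists M0. auto.
  - intros x y [Hx1 Hx2] Hy. simpl. exists (RInt f x y). split.
    + apply (RInt_correct (V:=R_CompleteNormedModule)). apply ex_RInt_pos; auto; lra.
    + apply HP. unfold ball; simpl; unfold AbsRing_ball, abs, minus, plus, opp; simpl.
      assert (Hle : RInt f e0 M0 <= RInt f x y) by (apply RInt_mono_nonneg; auto; lra).
      assert (Hup : RInt f x y <= L) by (apply HL1; exists x, y; repeat split; lra).
      apply Rabs_def1; destruct eps; simpl in *; lra.
Qed.

Lemma locally_pos (t : R) : 0 < t -> locally t (fun y => 0 < y).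
Proof.
  intros Ht. exists (mkposreal t Ht). intros y Hy.
  unfold ball in Hy; simpl in Hy; unfold AbsRing_ball, abs, minus, plus, opp in Hy; simpl in Hy.
  apply Rabs_def2 in Hy. lra.
Qed.

Lemma is_derive_Rpower (y t : R) : 0 < t ->
  is_derive (fun x => Rpower x y) t (y * Rpower t (y - 1)).
Proof. intros Ht. apply is_derive_Reals. apply derivable_pt_lim_power. exact Ht. Qed.

Lemma cont_Rpower (y t : R) : 0 < t -> continuous (fun x => Rpower x y) t.
Proof. intros Ht. apply (ex_derive_continuous (K:=R_AbsRing) (V:=R_NormedModule)). eexists. apply is_derive_Rpower. exact Ht. Qed.

Lemma cont_exp_lin (c t : R) : continuous (fun x => exp (c * x)) t.
Proof. apply (ex_derive_continuous (K:=R_AbsRing) (V:=R_NormedModule)). auto_derive. auto. Qed.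

Definition gi (s : R) := fun t => rpow t (s - 1) * exp (- t).

Lemma cont_gi (s t : R) : 0 < t -> continuous (gi s) t.
Proof.
  intros Ht. apply continuous_ext_loc with (fun x => Rpower x (s - 1) * exp (-1 * x)).
  - apply filter_imp with (2 := locally_pos t Ht). intros y Hy. unfold gi. rewrite rpow_pos by auto.
    f_equal. f_equal. ring.
  - apply (continuous_mult (K := R_AbsRing)). apply cont_Rpower; auto. apply cont_exp_lin.
Qed.

Lemma gi_pos (s t : R) : 0 < t -> 0 < gi s t.
Proof. intros Ht. unfold gi. rewrite rpow_pos by auto. apply Rmult_lt_0_compat. apply Rpower_pos. apply exp_pos. Qed.

Lemma FTC (F f : R -> R) (a b : R) :
  (forall x, Rmin a b <= x <= Rmax a b -> is_derive F x (f x)) ->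
  (forall x, Rmin a b <= x <= Rmax a b -> continuous f x) ->
  is_RInt f a b (F b - F a).
Proof.
  intros H1 H2. apply (is_RInt_derive (V:=R_CompleteNormedModule) F f a b H1 H2).
Qed.

Lemma Rpower_1_base (y : R) : Rpower 1 y = 1.
Proof. unfold Rpower. rewrite ln_1, Rmult_0_r. apply exp_0. Qed.

Lemma Rmin_Rmax_pos (a b x : R) : 0 < a -> 0 < b -> Rmin a b <= x <= Rmax a b -> 0 < x.
Proof. intros Ha Hb [H1 _]. unfold Rmin in H1. destruct (Rle_dec a b); lra. Qed.

Lemma cont_Rpower_m (y t : R) : 0 < t -> continuous (fun x => Rpower x y) t.
Proof. apply cont_Rpower. Qed.

Lemma gi_bound (s : R) : 0 < s -> exists B, forall e M, 0 < e -> e <= M -> RInt (gi s) e M <= B.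
Proof.
  intros Hs. destruct (rpow_le_exp (s - 1)) as [C [HC HCb]].
  exists (1 / s + 2 * C). intros e M He HeM.
  set (e' := Rmin e 1). set (M' := Rmax M 1).
  assert (He' : 0 < e' /\ e' <= e /\ e' <= 1).
  { unfold e', Rmin. destruct (Rle_dec e 1); lra. }
  assert (HM' : M <= M' /\ 1 <= M').
  { unfold M', Rmax. destruct (Rle_dec M 1); lra. }
  assert (Hcg := cont_gi s).
  assert (H1 : RInt (gi s) e M <= RInt (gi s) e' M').
  { apply RInt_mono_nonneg; auto. intros; apply Rlt_le, gi_pos; auto. lra. lra. lra. }
  assert (E := RInt_Chasles (gi s) e' 1 M' (ex_RInt_pos _ Hcg e' 1 ltac:(lra) ltac:(lra))
      (ex_RInt_pos _ Hcg 1 M' ltac:(lra) ltac:(lra))).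
  unfold plus in E; simpl in E.
  assert (Hi1 : is_RInt (fun x => Rpower x (s - 1)) e' 1 (/ s * Rpower 1 s - / s * Rpower e' s)).
  { apply (FTC (fun x => / s * Rpower x s)).
    - intros x Hx. assert (0 < x) by (apply (Rmin_Rmax_pos e' 1); lra).
      replace (Rpower x (s - 1)) with (/ s * (s * Rpower x (s - 1))) by (field; lra).
      apply is_derive_scal. apply is_derive_Rpower. auto.
    - intros x Hx. apply cont_Rpower. apply (Rmin_Rmax_pos e' 1); lra. }
  assert (H2 : RInt (gi s) e' 1 <= 1 / s).
  { eapply Rle_trans. apply RInt_le with (g := fun x => Rpower x (s - 1)). lra.
    apply ex_RInt_pos; auto; lra. eexists; exact Hi1.
    intros x Hx. unfold gi. rewrite rpow_pos by lra.
    assert (exp (- x) <= 1). { rewrite <- exp_0. apply Rlt_le, exp_increasing. lra. }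
    pose proof (Rpower_pos x (s - 1)). nra.
    rewrite (is_RInt_unique _ _ _ _ Hi1). rewrite Rpower_1_base.
    pose proof (Rpower_pos e' s). assert (0 < / s) by (apply Rinv_0_lt_compat; lra).
    unfold Rdiv. nra. }
  assert (Hi2 : is_RInt (fun x => C * exp ((-1/2) * x)) 1 M'
      ((-2 * C) * exp ((-1/2) * M') - (-2 * C) * exp ((-1/2) * 1))).
  { apply (FTC (fun x => (-2 * C) * exp ((-1/2) * x))).
    - intros x Hx. auto_derive; auto. field.
    - intros x Hx. apply (continuous_mult (K:=R_AbsRing)). apply continuous_const. apply cont_exp_lin. }
  assert (H3 : RInt (gi s) 1 M' <= 2 * C).
  { eapply Rle_trans. apply RInt_le with (g := fun x => C * exp ((-1/2) * x)). lra.
    apply ex_RInt_pos; auto; lra. eexists; exact Hi2.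
    intros x Hx. unfold gi. rewrite rpow_pos by lra.
    replace (exp ((-1/2) * x)) with (exp (x / 2) * exp (- x)) by (rewrite <- exp_plus; f_equal; field).
    rewrite <- Rmult_assoc. apply Rmult_le_compat_r. apply Rlt_le, exp_pos. apply HCb. lra.
    rewrite (is_RInt_unique _ _ _ _ Hi2).
    pose proof (exp_pos ((-1/2) * M')). assert (exp ((-1/2) * 1) <= exp 0) by (apply Rlt_le, exp_increasing; lra).
    rewrite exp_0 in H0.
    nra. }
  lra.
Qed.

Lemma ball_R (y eps z : R) : ball y eps z <-> Rabs (z - y) < eps.
Proof.
  unfold ball; simpl; unfold AbsRing_ball, abs, minus, plus, opp; simpl. tauto.
Qed.

Lemma Gamma_spec (s : R) : 0 < s ->
  is_RInt_gen (gi s) (at_right 0) (Rbar_locally p_infty) (Gamma s) /\ 0 < Gamma s.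
Proof.
  intros Hs. destruct (gi_bound s Hs) as [B HB].
  destruct (improper_exists (gi s) B (cont_gi s) (fun t Ht => Rlt_le _ _ (gi_pos s t Ht)) HB)
    as [L [HL Hup]].
  assert (EG : Gamma s = L).
  { unfold Gamma. change (fun t : R => rpow t (s - 1) * exp (- t)) with (gi s).
    apply (is_RInt_gen_unique (V:=R_CompleteNormedModule)); auto. }
  rewrite EG. split; auto.
  eapply Rlt_le_trans; [|apply (Hup 1 2); lra].
  apply RInt_gt_0. lra. intros; apply gi_pos; lra. intros; apply cont_gi; lra.
Qed.

Lemma is_derive_F (s x : R) : 0 < x ->
  is_derive (fun t => Rpower t s * exp (- t)) x
    (s * Rpower x (s - 1) * exp (- x) - Rpower x s * exp (- x)).
Proof.
  intros Hx.
  assert (H1 := is_derive_Rpower s x Hx).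
  assert (H2 : is_derive (fun t => exp (- t)) x (- exp (- x))) by (auto_derive; auto; ring).
  assert (H := is_derive_mult (K:=R_AbsRing) _ _ x _ _ H1 H2 (fun n m => Rmult_comm n m)).
  unfold mult, plus in H; simpl in H.
  replace (s * Rpower x (s - 1) * exp (- x) - Rpower x s * exp (- x)) with
    (s * Rpower x (s - 1) * exp (- x) + Rpower x s * (- exp (- x))) by ring.
  exact H.
Qed.

Lemma fp_pos (P : R -> Prop) : (forall x, 0 < x -> P x) ->
  filter_prod (at_right 0) (Rbar_locally p_infty)
    (fun ab => forall x, Rmin (fst ab) (snd ab) <= x <= Rmax (fst ab) (snd ab) -> P x).
Proof.
  intros HP. apply Filter_prod with (fun x => 0 < x) (fun y => 0 < y).
  - exists (mkposreal 1 Rlt_0_1). intros y _ Hy. exact Hy.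
  - exists 0. auto.
  - intros x y Hx Hy z Hz. apply HP. simpl in Hz. apply (Rmin_Rmax_pos x y); auto.
Qed.

Lemma fp_pos_lt (P : R -> Prop) : (forall x, 0 < x -> P x) ->
  filter_prod (at_right 0) (Rbar_locally p_infty)
    (fun ab => forall x, Rmin (fst ab) (snd ab) < x < Rmax (fst ab) (snd ab) -> P x).
Proof.
  intros HP. eapply filter_imp; [|apply (fp_pos P HP)]. intros ab H x Hx. apply H; lra.
Qed.

Lemma lim_Rpower_0 (s : R) : 0 < s -> filterlim (fun t => Rpower t s * exp (- t)) (at_right 0) (locally 0).
Proof.
  intros Hs. apply filterlim_locally. intros eps.
  exists (mkposreal (Rpower eps (/ s)) (Rpower_pos _ _)). intros y Hy Hy0.
  assert (Hy1 : Rabs (y - 0) < Rpower eps (/ s)) by (apply ball_R; exact Hy). clear Hy. rename Hy1 into Hy. apply ball_R. rewrite Rminus_0_r. rewrite Rminus_0_r in Hy.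
  rewrite Rabs_pos_eq in Hy by lra.
  rewrite Rabs_pos_eq by (apply Rmult_le_pos; [apply Rlt_le, Rpower_pos| apply Rlt_le, exp_pos]).
  assert (exp (- y) <= 1) by (rewrite <- exp_0; apply Rlt_le, exp_increasing; lra).
  assert (Rpower y s < eps).
  { assert (E : Rpower (Rpower eps (/ s)) s = eps).
    { rewrite Rpower_mult. replace (/ s * s) with 1 by (field; lra). apply Rpower_1. apply cond_pos. }
    rewrite <- E. apply Rlt_Rpower_l. lra. split; lra. }
  pose proof (Rpower_pos y s). nra.
Qed.

Lemma lim_Rpower_inf (s : R) : filterlim (fun t => Rpower t s * exp (- t)) (Rbar_locally p_infty) (locally 0).
Proof.
  destruct (rpow_le_exp s) as [C [HC HCb]].
  apply filterlim_locally. intros eps.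
  exists (Rmax 1 (- 2 * ln (eps / C))). intros y Hy.
  assert (Hy1 : 1 < y) by (eapply Rle_lt_trans; [apply Rmax_l| exact Hy]).
  assert (Hy2 : - 2 * ln (eps / C) < y) by (eapply Rle_lt_trans; [apply Rmax_r| exact Hy]).
  apply ball_R. rewrite Rminus_0_r.
  rewrite Rabs_pos_eq by (apply Rmult_le_pos; [apply Rlt_le, Rpower_pos| apply Rlt_le, exp_pos]).
  eapply Rle_lt_trans. apply Rmult_le_compat_r. apply Rlt_le, exp_pos. apply HCb. lra.
  rewrite Rmult_assoc, <- exp_plus.
  assert (Hep : 0 < eps / C) by (apply Rdiv_lt_0_compat; [apply cond_pos|auto]).
  assert (exp (y / 2 + - y) < eps / C).
  { rewrite <- (exp_ln (eps / C)) by auto. apply exp_increasing. lra. }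
  apply Rmult_lt_compat_l with (r := C) in H; auto.
  replace (C * (eps / C)) with (pos eps) in H by (field; lra). exact H.
Qed.

Lemma Gamma_FE (s : R) : 0 < s -> Gamma (s + 1) = s * Gamma s.
Proof.
  intros Hs. destruct (Gamma_spec s Hs) as [HG _].
  set (F := fun t => Rpower t s * exp (- t)).
  assert (HDF : forall x, 0 < x -> Derive F x = s * gi s x - gi (s + 1) x).
  { intros x Hx. apply is_derive_unique. unfold gi. rewrite !rpow_pos by auto.
    replace (s + 1 - 1) with s by ring. rewrite <- Rmult_assoc. apply is_derive_F. auto. }
  assert (HD : is_RInt_gen (Derive F) (at_right 0) (Rbar_locally p_infty) (0 - 0)).
  { apply is_RInt_gen_Derive.
    - apply fp_pos. intros x Hx. eexists. apply is_derive_F. auto.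
    - apply fp_pos. intros x Hx.
      apply continuous_ext_loc with (fun y => s * gi s y - gi (s + 1) y).
      + apply filter_imp with (2 := locally_pos x Hx). intros y Hy. symmetry. apply HDF. auto.
      + apply (continuous_minus (V:=R_NormedModule)).
        apply (continuous_scal_r (V:=R_NormedModule) s). apply cont_gi; auto. apply cont_gi; auto.
    - apply lim_Rpower_0; auto.
    - apply lim_Rpower_inf. }
  assert (H := is_RInt_gen_minus _ _ _ _ (is_RInt_gen_scal _ s _ HG) HD).
  assert (H' : is_RInt_gen (gi (s + 1)) (at_right 0) (Rbar_locally p_infty) (s * Gamma s)).
  { replace (s * Gamma s) with (minus (scal s (Gamma s)) (0 - 0)).
    2:{ unfold minus, plus, opp, scal; simpl. unfold mult; simpl. ring. }
    eapply is_RInt_gen_ext; [| exact H].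
    apply fp_pos_lt. intros x Hx. rewrite HDF by auto. unfold minus, plus, opp, scal; simpl. unfold mult; simpl. ring. }
  unfold Gamma at 1. change (fun t : R => rpow t (s + 1 - 1) * exp (- t)) with (gi (s + 1)).
  apply (is_RInt_gen_unique (V:=R_CompleteNormedModule)); auto.
Qed.

Lemma term_eq (a : R) (n : nat) : 0 < a ->
  term a (S n) = a / (a + 1) / ((a + 1) ^ 2 * INR (S n) ^ 2 - 1).
Proof.
  intros Ha. unfold term.
  set (m := INR (S n)).
  assert (Hm : 1 <= m) by (unfold m; rewrite S_INR; pose proof (pos_INR n); lra).
  set (s := a * m + m - 1).
  assert (Hs : 0 < s) by (unfold s; nra).
  assert (Han : 0 < a * m) by nra.
  rewrite (Gamma_FE (a * m) Han).
  replace (a * m + m + 2) with (((s + 1) + 1) + 1) by (unfold s; ring).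
  rewrite (Gamma_FE (s + 1 + 1)) by lra. rewrite (Gamma_FE (s + 1)) by lra.
  rewrite (Gamma_FE s) by lra.
  replace (a * m + m - 1) with s by reflexivity.
  destruct (Gamma_spec s Hs) as [_ G1]. destruct (Gamma_spec (a * m) Han) as [_ G2].
  replace ((a + 1) ^ 2 * m ^ 2 - 1) with (s * (s + 2)) by (unfold s; ring).
  replace (a * m) with (a / (a + 1) * (s + 1)) at 1 by (unfold s; field; lra).
  field. repeat split; lra.
Qed.

(* telescoping majorant *)
Definition cmaj (n : nat) : R := / ((INR n + 1) * (INR n + 2)).

Lemma cmaj_pos (n : nat) : 0 < cmaj n.
Proof. unfold cmaj. pose proof (pos_INR n). apply Rinv_0_lt_compat. nra. Qed.

Lemma cmaj_series : is_series cmaj 1.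
Proof.
  unfold is_series. change (is_lim_seq (sum_n cmaj) 1).
  apply is_lim_seq_ext with (fun N => 1 - / (INR N + 2)).
  { intros N. rewrite sum_n_Reals. induction N as [|N IH].
    - simpl. unfold cmaj. simpl. field.
    - simpl sum_f_R0. rewrite <- IH. unfold cmaj. rewrite S_INR. pose proof (pos_INR N). field. lra. }
  replace (Finite 1) with (Rbar_minus 1 0) by (simpl; f_equal; ring).
  apply is_lim_seq_minus'. apply is_lim_seq_const.
  replace (Finite 0) with (Rbar_inv p_infty) by reflexivity.
  apply is_lim_seq_inv. 2: discriminate.
  eapply is_lim_seq_plus. apply is_lim_seq_INR. apply is_lim_seq_const. reflexivity.
Qed.

Lemma div_le (a b c d : R) : 0 < b -> 0 < d -> a * d <= c * b -> a / b <= c / d.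
Proof.
  intros Hb Hd H. unfold Rdiv.
  apply Rmult_le_reg_r with (b * d). nra.
  replace (a * / b * (b * d)) with (a * d) by (field; lra).
  replace (c * / d * (b * d)) with (c * b) by (field; lra). exact H.
Qed.

Definition te (x : R) (n : nat) : R := 2 * x / (x ^ 2 - (INR n + 2) ^ 2).

Lemma te_bound (x : R) (n : nat) : Rabs x <= 3 / 2 -> Rabs (te x n) <= 8 * cmaj n.
Proof.
  intros Hx. unfold te, cmaj. set (m := INR n + 2).
  assert (Hm : 2 <= m) by (unfold m; pose proof (pos_INR n); lra).
  replace (INR n + 1) with (m - 1) by (unfold m; ring). replace (INR n + 2) with m by reflexivity.
  assert (Hx2 : x ^ 2 <= 9 / 4) by (apply Rabs_le_between in Hx; nra).
  unfold Rdiv. rewrite Rabs_mult, Rabs_inv. rewrite (Rabs_left1 (x ^ 2 - m ^ 2)) by nra.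
  rewrite Rabs_mult, (Rabs_pos_eq 2) by lra.
  fold (Rdiv (2 * Rabs x) (- (x ^ 2 - m ^ 2))).
  change (8 * / ((m - 1) * m)) with (8 / ((m - 1) * m)).
  apply div_le; try nra. assert (2 * Rabs x * ((m - 1) * m) <= 3 * ((m - 1) * m)) by (apply Rmult_le_compat_r; nra). nra.
Qed.

Lemma te_lip (x y : R) (n : nat) : Rabs x <= 3 / 2 -> Rabs y <= 3 / 2 ->
  Rabs (te x n - te y n) <= 17 * cmaj n * Rabs (x - y).
Proof.
  intros Hx Hy. unfold te, cmaj. set (m := INR n + 2).
  assert (Hm : 2 <= m) by (unfold m; pose proof (pos_INR n); lra).
  replace (INR n + 1) with (m - 1) by (unfold m; ring). replace (INR n + 2) with m by reflexivity.
  apply Rabs_le_between in Hx. apply Rabs_le_between in Hy.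
  assert (Hx2 : x ^ 2 <= 9 / 4) by nra. assert (Hy2 : y ^ 2 <= 9 / 4) by nra.
  assert (Dx : x ^ 2 - m ^ 2 < 0) by nra. assert (Dy : y ^ 2 - m ^ 2 < 0) by nra.
  replace (2 * x / (x ^ 2 - m ^ 2) - 2 * y / (y ^ 2 - m ^ 2)) with
    ((x - y) * (2 * (- (x * y) - m ^ 2) / ((x ^ 2 - m ^ 2) * (y ^ 2 - m ^ 2)))) by (field; lra).
  rewrite Rabs_mult. rewrite (Rmult_comm (17 * _)). apply Rmult_le_compat_l. apply Rabs_pos.
  unfold Rdiv. rewrite Rabs_mult, Rabs_inv.
  rewrite (Rabs_pos_eq ((x ^ 2 - m ^ 2) * (y ^ 2 - m ^ 2))) by nra.
  assert (Hxy : Rabs (2 * (- (x * y) - m ^ 2)) <= 2 * (9 / 4 + m ^ 2)).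
  { rewrite Rabs_mult, (Rabs_pos_eq 2) by lra. apply Rmult_le_compat_l. lra.
    apply Rabs_le. split; nra. }
  assert (Hq : 0 < m ^ 2 - 9 / 4) by nra.
  assert (Hp : (m ^ 2 - 9 / 4) ^ 2 <= (x ^ 2 - m ^ 2) * (y ^ 2 - m ^ 2)).
  { replace ((x ^ 2 - m ^ 2) * (y ^ 2 - m ^ 2)) with ((m ^ 2 - x ^ 2) * (m ^ 2 - y ^ 2)) by ring.
    simpl (_ ^ 2) at 1. rewrite Rmult_1_r. apply Rmult_le_compat; lra. }
  apply Rle_trans with (2 * (9 / 4 + m ^ 2) * / ((m ^ 2 - 9 / 4) ^ 2)).
  { apply Rmult_le_compat. apply Rabs_pos. apply Rlt_le, Rinv_0_lt_compat. nra. exact Hxy.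
    apply Rinv_le_contravar. nra. exact Hp. }
  fold (Rdiv (2 * (9 / 4 + m ^ 2)) ((m ^ 2 - 9 / 4) ^ 2)).
  change (17 * / ((m - 1) * m)) with (17 / ((m - 1) * m)).
  apply div_le; try nra. set (t := m - 2). assert (Ht : 0 <= t) by (unfold t; lra). replace m with (t + 2) by (unfold t; ring). nra.
Qed.

Definition E2 (x : R) : R := Series (te x).

Lemma cmaj_ex : ex_series cmaj.
Proof. exists 1. apply cmaj_series. Qed.

Lemma ex_series_scal_maj (c : R) : ex_series (fun n => c * cmaj n).
Proof. exists (c * 1). exact (is_series_scal_l c _ _ cmaj_series). Qed.

Lemma Series_scal_maj (c : R) : Series (fun n => c * cmaj n) = c.
Proof. rewrite Series_scal_l. rewrite (is_series_unique _ _ cmaj_series). ring. Qed.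

Lemma te_ex (x : R) : Rabs x <= 3 / 2 -> ex_series (te x).
Proof.
  intros Hx. apply (ex_series_le (V:=R_CompleteNormedModule)) with (fun n => 8 * cmaj n).
  intros n. apply te_bound. auto. apply ex_series_scal_maj.
Qed.

Lemma E2_lip (x y : R) : Rabs x <= 3 / 2 -> Rabs y <= 3 / 2 -> Rabs (E2 x - E2 y) <= 17 * Rabs (x - y).
Proof.
  intros Hx Hy. unfold E2. rewrite <- Series_minus by (apply te_ex; auto).
  assert (Hex : ex_series (fun n => Rabs (te x n - te y n))).
  { apply (ex_series_le (V:=R_CompleteNormedModule)) with (fun n => (17 * Rabs (x - y)) * cmaj n).
    intros n. change (norm (Rabs (te x n - te y n))) with (Rabs (Rabs (te x n - te y n))).
    rewrite Rabs_Rabsolu. rewrite te_lip by auto. lra. 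
    apply ex_series_scal_maj. }
  eapply Rle_trans. apply Series_Rabs. exact Hex.
  rewrite <- (Series_scal_maj (17 * Rabs (x - y))).
  apply Series_le. intros n. split. apply Rabs_pos.
  eapply Rle_trans. apply te_lip; auto. lra. apply ex_series_scal_maj.
Qed.

Lemma sinb (a:R) : 0 <= a -> a <= PI -> a - a^3/6 <= sin a <= a - a^3/6 + a^5/120.
Proof.
intros H1 H2. pose proof (sin_bound a 0 H1 H2) as H. unfold sin_approx, sin_term in H. simpl in H.
match type of H with ?l <= _ <= ?r => replace (a - a ^ 3 / 6 + a ^ 5 / 120) with r by field; replace (a - a^3/6) with l by field end. exact H.
Qed.
Lemma cosb (a:R) : - PI / 2 <= a -> a <= PI / 2 -> 1 - a^2/2 <= cos a <= 1 - a^2/2 + a^4/24.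
Proof.
intros H1 H2. pose proof (cos_bound a 0 H1 H2) as H. unfold cos_approx, cos_term in H. simpl in H.
match type of H with ?l <= _ <= ?r => replace (1 - a ^ 2 / 2 + a ^ 4 / 24) with r by field; replace (1 - a^2/2) with l by field end. exact H.
Qed.

Lemma PI_gt_2 : 2 < PI.
Proof. pose proof PI2_1. lra. Qed.

Lemma abs_div_le (n d k : R) : 0 < d -> Rabs n <= k * d -> Rabs (n / d) <= k.
Proof.
  intros Hd H. unfold Rdiv. rewrite Rabs_mult, Rabs_inv, (Rabs_pos_eq d) by lra.
  apply Rmult_le_reg_r with d. lra. rewrite Rmult_assoc, Rinv_l by lra. lra.
Qed.

Lemma kc_bound_pos (y : R) : 0 < y <= 1 -> Rabs (cot y - 1 / y) <= 2 * y.
Proof.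
  intros Hy. pose proof PI_gt_2.
  destruct (sinb y) as [Hs1 Hs2]; try lra. destruct (cosb y) as [Hc1 Hc2]; try lra.
  assert (Hs : 5 * y / 6 <= sin y) by nra.
  unfold cot. replace (cos y / sin y - 1 / y) with ((y * cos y - sin y) / (y * sin y)) by (field; split; lra).
  apply abs_div_le. nra.
  assert (H5 : y ^ 5 <= y ^ 3) by (replace (y ^ 5) with (y ^ 3 * y ^ 2) by ring; assert (0 < y ^ 3) by (apply pow_lt; lra); nra).
  assert (A1 : y * (1 - y^2/2) <= y * cos y) by (apply Rmult_le_compat_l; lra).
  assert (A2 : y * cos y <= y * (1 - y^2/2 + y^4/24)) by (apply Rmult_le_compat_l; lra).
  assert (B : y * (y * (5 * y / 6)) <= y * (y * sin y)) by (apply Rmult_le_compat_l; [lra|apply Rmult_le_compat_l; lra]).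
  assert (P3 : 0 < y ^ 3) by (apply pow_lt; lra).
  apply Rabs_le. split.
  - assert (E1 : y * (1 - y^2/2) - (y - y^3/6 + y^5/120) = - y^3/3 - y^5/120) by field.
    assert (E2 : y * (y * (5 * y / 6)) = 5 * y^3 / 6) by field.
    nra.
  - assert (E1 : y * (1 - y^2/2 + y^4/24) - (y - y^3/6) = - y^3/3 + y^5/24) by field.
    assert (E2 : y * (y * (5 * y / 6)) = 5 * y^3 / 6) by field.
    nra.
Qed.

Definition kc (y : R) : R := if Req_EM_T y 0 then 0 else cot y - 1 / y.

Lemma kc_bound (y : R) : Rabs y <= 1 -> Rabs (kc y) <= 2 * Rabs y.
Proof.
  intros Hy. unfold kc. destruct (Req_EM_T y 0) as [->|Hn].
  - rewrite Rabs_R0. lra.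
  - destruct (Rlt_le_dec 0 y) as [Hp|Hn'].
    + rewrite (Rabs_pos_eq y) in * by lra. apply kc_bound_pos. lra.
    + assert (Hneg : y < 0) by lra. rewrite (Rabs_left y) in * by lra.
      replace (cot y - 1 / y) with (- (cot (- y) - 1 / (- y))).
      rewrite Rabs_Ropp. apply kc_bound_pos. lra.
      unfold cot. rewrite sin_neg, cos_neg. field. split. lra.
      intros Hs. assert (0 < sin (- y)) by (apply sin_gt_0; pose proof PI_gt_2; lra).
      rewrite sin_neg in H. lra.
Qed.

Lemma kc_0 : kc 0 = 0.
Proof. unfold kc. destruct (Req_EM_T 0 0); [reflexivity|congruence]. Qed.

Lemma kc_cont0 : continuous kc 0.
Proof.
  apply filterlim_locally. intros eps.
  assert (He : 0 < Rmin 1 (eps / 2)) by (apply Rmin_pos; [lra| destruct eps; simpl; lra]).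
  exists (mkposreal _ He). intros y Hy.
  assert (Hy1 : Rabs (y - 0) < Rmin 1 (eps / 2)) by (apply ball_R; exact Hy).
  apply ball_R. rewrite kc_0, Rminus_0_r in *.
  assert (Rmin 1 (eps / 2) <= 1) by apply Rmin_l. assert (Rmin 1 (eps / 2) <= eps / 2) by apply Rmin_r.
  eapply Rle_lt_trans. apply kc_bound. lra. lra.
Qed.

Lemma sin_neq0 (y : R) : y <> 0 -> - PI < y < PI -> sin y <> 0.
Proof.
  intros H0 H. destruct (Rlt_le_dec 0 y).
  - assert (0 < sin y) by (apply sin_gt_0; lra). lra.
  - assert (0 < sin (- y)) by (apply sin_gt_0; lra). rewrite sin_neg in H1. lra.
Qed.

Lemma kc_cont (y : R) : y <> 0 -> - PI < y < PI -> continuous kc y.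
Proof.
  intros H0 H. apply continuous_ext_loc with (fun t => cos t / sin t - 1 / t).
  - assert (Hy : 0 < Rabs y) by (apply Rabs_pos_lt; auto).
    exists (mkposreal _ Hy). intros t Ht.
    assert (Ht1 : Rabs (t - y) < Rabs y) by (apply ball_R; exact Ht).
    unfold kc. destruct (Req_EM_T t 0) as [->|]; [|reflexivity].
    rewrite Rminus_0_l, Rabs_Ropp in Ht1. lra.
  - apply (ex_derive_continuous (K:=R_AbsRing) (V:=R_NormedModule)).
    auto_derive. split; [apply sin_neq0; auto| split; auto].
Qed.

Lemma E2_cont (x : R) : Rabs x < 3 / 2 -> continuous E2 x.
Proof.
  intros Hx. apply filterlim_locally. intros eps.
  assert (He : 0 < Rmin (eps / 18) (3 / 2 - Rabs x)) by (apply Rmin_pos; [destruct eps; simpl; lra| lra]).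
  exists (mkposreal _ He). intros y Hy.
  assert (Hy1 : Rabs (y - x) < Rmin (eps / 18) (3 / 2 - Rabs x)) by (apply ball_R; exact Hy).
  apply ball_R.
  assert (H1 := Rmin_l (eps / 18) (3 / 2 - Rabs x)). assert (H2 := Rmin_r (eps / 18) (3 / 2 - Rabs x)).
  assert (Hy2 : Rabs y <= 3 / 2).
  { replace y with (x + (y - x)) by ring. eapply Rle_trans. apply Rabs_triang. lra. }
  eapply Rle_lt_trans. apply E2_lip; lra. destruct eps; simpl in *. lra.
Qed.

Lemma kcPI_cont (u : R) : -1 < u < 1 -> continuous (fun x => PI * kc (PI * x)) u.
Proof.
  intros Hu. apply (continuous_scal_r (V:=R_NormedModule) PI (fun x => kc (PI * x))).
  apply (continuous_comp (fun x => PI * x) kc).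
  - apply (ex_derive_continuous (K:=R_AbsRing) (V:=R_NormedModule)). auto_derive. auto.
  - destruct (Req_EM_T u 0) as [->|Hn].
    + rewrite Rmult_0_r. apply kc_cont0.
    + apply kc_cont. intros H. apply Rmult_integral in H. destruct H. pose proof PI_RGT_0; lra. auto.
      pose proof PI_RGT_0. split; nra.
Qed.

Lemma cont_inv_shift (c x : R) : x + c <> 0 -> continuous (fun t => 1 / (t + c)) x.
Proof.
  intros H. apply (ex_derive_continuous (K:=R_AbsRing) (V:=R_NormedModule)). auto_derive. auto.
Qed.

Lemma cont_inv_sub (c x : R) : x - c <> 0 -> continuous (fun t => 1 / (t - c)) x.
Proof.
  intros H. apply (ex_derive_continuous (K:=R_AbsRing) (V:=R_NormedModule)). auto_derive. auto.
Qed.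

Lemma cont_inv (x : R) : x <> 0 -> continuous (fun t => 1 / t) x.
Proof.
  intros H. apply (ex_derive_continuous (K:=R_AbsRing) (V:=R_NormedModule)). auto_derive. auto.
Qed.

Definition Db1 (x : R) : R := PI * kc (PI * x) - 1 / (x - 1) - 1 / (x + 1) - E2 x.
Definition Db2 (x : R) : R := PI * kc (PI * (x - 1)) - 1 / x - 1 / (x + 1) - E2 x.
Definition Dfun (x : R) : R := if Rlt_dec x (1 / 2) then Db1 x else Db2 x.

Lemma Db1_cont (x : R) : -1 < x < 1 -> continuous Db1 x.
Proof.
  intros Hx. unfold Db1.
  apply (continuous_minus (V:=R_NormedModule)). apply (continuous_minus (V:=R_NormedModule)).
  apply (continuous_minus (V:=R_NormedModule)). apply kcPI_cont; auto.
  apply (cont_inv_sub 1). lra. apply (cont_inv_shift 1). lra.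
  apply E2_cont. apply Rabs_def1; lra.
Qed.

Lemma Db2_cont (x : R) : 0 < x < 3 / 2 -> continuous Db2 x.
Proof.
  intros Hx. unfold Db2.
  apply (continuous_minus (V:=R_NormedModule)). apply (continuous_minus (V:=R_NormedModule)).
  apply (continuous_minus (V:=R_NormedModule)).
  apply (continuous_comp (fun t => t - 1) (fun x => PI * kc (PI * x))).
  apply (ex_derive_continuous (K:=R_AbsRing) (V:=R_NormedModule)). auto_derive. auto.
  apply kcPI_cont; lra.
  apply cont_inv. lra.
  apply (cont_inv_shift 1). lra.
  apply E2_cont. apply Rabs_def1; lra.
Qed.

Definition hh (x : R) : R := 1 / x + 1 / (x - 1) + 1 / (x + 1) + E2 x.

Lemma PI_pos : 0 < PI.
Proof. apply PI_RGT_0. Qed.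

Lemma cot_shift (t : R) : cot (t - PI) = cot t.
Proof.
  unfold cot. assert (Hc := neg_cos (t - PI)). assert (Hs := neg_sin (t - PI)).
  replace (t - PI + PI) with t in Hc, Hs by ring.
  replace (cos (t - PI)) with (- cos t) by lra. replace (sin (t - PI)) with (- sin t) by lra.
  unfold Rdiv. rewrite Rinv_opp. ring.
Qed.

Lemma Db1_eq (x : R) : 0 < x < 1 -> Db1 x = PI * cot (PI * x) - hh x.
Proof.
  intros Hx. pose proof PI_pos. unfold Db1, hh, kc.
  destruct (Req_EM_T (PI * x) 0) as [E|_]. { apply Rmult_integral in E; lra. }
  field. repeat split; lra.
Qed.

Lemma Db2_eq (x : R) : 0 < x < 1 -> Db2 x = PI * cot (PI * x) - hh x.
Proof.
  intros Hx. pose proof PI_pos. unfold Db2, hh, kc.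
  destruct (Req_EM_T (PI * (x - 1)) 0) as [E|_]. { apply Rmult_integral in E; lra. }
  replace (PI * (x - 1)) with (PI * x - PI) by ring. rewrite cot_shift.
  assert (Hq : PI * x - PI <> 0) by (intro; nra).
  field. repeat split; try lra; auto.
Qed.

Lemma Dfun_eq (x : R) : 0 < x < 1 -> Dfun x = PI * cot (PI * x) - hh x.
Proof.
  intros Hx. unfold Dfun. destruct (Rlt_dec x (1 / 2)). apply Db1_eq; auto. apply Db2_eq; auto.
Qed.

Lemma Dfun_cont (x : R) : 0 <= x <= 1 -> continuous Dfun x.
Proof.
  intros Hx. destruct (Rtotal_order x (1 / 2)) as [Hl|[He|Hg]].
  - apply continuous_ext_loc with Db1; [| apply Db1_cont; lra].
    assert (Hr : 0 < 1 / 2 - x) by lra. exists (mkposreal _ Hr). intros y Hy.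
    assert (Hy1 : Rabs (y - x) < 1 / 2 - x) by (apply ball_R; exact Hy).
    apply Rabs_def2 in Hy1. unfold Dfun. destruct (Rlt_dec y (1 / 2)); [reflexivity| lra].
  - subst x. apply continuous_ext_loc with Db1; [| apply Db1_cont; lra].
    assert (Hr : 0 < 1 / 4) by lra. exists (mkposreal _ Hr). intros y Hy.
    assert (Hy1 : Rabs (y - 1 / 2) < 1 / 4) by (apply ball_R; exact Hy).
    apply Rabs_def2 in Hy1. unfold Dfun. destruct (Rlt_dec y (1 / 2)); [reflexivity|].
    rewrite Db1_eq, Db2_eq by lra. reflexivity.
  - apply continuous_ext_loc with Db2; [| apply Db2_cont; lra].
    assert (Hr : 0 < x - 1 / 2) by lra. exists (mkposreal _ Hr). intros y Hy.
    assert (Hy1 : Rabs (y - x) < x - 1 / 2) by (apply ball_R; exact Hy).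
    apply Rabs_def2 in Hy1. unfold Dfun. destruct (Rlt_dec y (1 / 2)); [lra| reflexivity].
Qed.

Definition ta (x : R) (n : nat) : R := 2 * x / (x ^ 2 - (INR n + 1) ^ 2).
Definition T (x : R) (N : nat) : R := 1 / x + sum_f_R0 (ta x) N.

Lemma ta_S (x : R) (n : nat) : ta x (S n) = te x n.
Proof. unfold ta, te. rewrite S_INR. f_equal. f_equal. f_equal. ring. Qed.

Lemma ta_ex (x : R) : Rabs x <= 3 / 2 -> ex_series (ta x).
Proof.
  intros Hx. apply ex_series_incr_1. apply ex_series_ext with (te x).
  intros n. symmetry. apply ta_S. apply te_ex. auto.
Qed.

Lemma Series_ta (x : R) : 0 < x < 1 -> Series (ta x) = 1 / (x - 1) + 1 / (x + 1) + E2 x.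
Proof.
  intros Hx. rewrite Series_incr_1 by (apply ta_ex; apply Rabs_le; lra).
  unfold E2. rewrite (Series_ext _ (te x)) by apply ta_S.
  unfold ta. simpl INR. f_equal. field. split; nra.
Qed.

Lemma T_lim (x : R) : 0 < x < 1 -> is_lim_seq (T x) (hh x).
Proof.
  intros Hx. unfold T, hh.
  replace (1 / x + 1 / (x - 1) + 1 / (x + 1) + E2 x) with (1 / x + Series (ta x)) by (rewrite Series_ta by auto; ring).
  apply is_lim_seq_plus'. apply is_lim_seq_const.
  assert (H := Series_correct _ (ta_ex x ltac:(apply Rabs_le; lra))).
  apply is_lim_seq_ext with (sum_n (ta x)). intros n. apply sum_n_Reals. exact H.
Qed.

Lemma dup_step (x n : R) : 0 < x < 1 -> 0 <= n ->
  2 * (x / 2) / ((x / 2) ^ 2 - (n + 2) ^ 2) + 2 * ((x + 1) / 2) / (((x + 1) / 2) ^ 2 - (n + 2) ^ 2)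
  = 2 * (2 * x / (x ^ 2 - (2 * n + 3) ^ 2) + 2 * x / (x ^ 2 - (2 * n + 4) ^ 2))
    + 2 / (x + 2 * n + 5) - 2 / (x + 2 * n + 3).
Proof.
  intros Hx Hn.
  assert (A1 : (x / 2) ^ 2 - (n + 2) ^ 2 <> 0) by nra.
  assert (A2 : ((x + 1) / 2) ^ 2 - (n + 2) ^ 2 <> 0) by nra.
  assert (A3 : x ^ 2 - (2 * n + 3) ^ 2 <> 0) by nra.
  assert (A4 : x ^ 2 - (2 * n + 4) ^ 2 <> 0) by nra.
  field. repeat split; lra.
Qed.

Lemma T_dup (x : R) (N : nat) : 0 < x < 1 ->
  T (x / 2) N + T ((x + 1) / 2) N = 2 * T x (2 * N + 1) + 2 / (x + 2 * INR N + 3).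
Proof.
  intros Hx. induction N as [|N IH].
  - unfold T, ta. simpl. field. repeat split; nra.
  - unfold T in *. rewrite !tech5.
    replace (2 * S N + 1)%nat with (S (S (2 * N + 1))) by lia. rewrite !tech5.
    assert (E : forall y, ta y (S N) = 2 * y / (y ^ 2 - (INR N + 2) ^ 2)).
    { intros y. unfold ta. rewrite S_INR. f_equal. f_equal. f_equal. ring. }
    rewrite !E.
    assert (E2' : ta x (S (2 * N + 1)) = 2 * x / (x ^ 2 - (2 * INR N + 3) ^ 2)).
    { unfold ta. rewrite S_INR, plus_INR, mult_INR. simpl (INR 2). simpl (INR 1). f_equal. f_equal. f_equal. ring. }
    assert (E3 : ta x (S (S (2 * N + 1))) = 2 * x / (x ^ 2 - (2 * INR N + 4) ^ 2)).
    { unfold ta. rewrite !S_INR, plus_INR, mult_INR. simpl (INR 2). simpl (INR 1). f_equal. f_equal. f_equal. ring. }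
    rewrite E2', E3.
    assert (Hn := pos_INR N).
    assert (D := dup_step x (INR N) Hx Hn).
    rewrite S_INR.
    replace (x + 2 * (INR N + 1) + 3) with (x + 2 * INR N + 5) by ring.
    lra.
Qed.

Lemma lim_inv_lin (x : R) : 0 < x -> is_lim_seq (fun N => 2 / (x + 2 * INR N + 3)) 0.
Proof.
  intros Hx.
  replace (Finite 0) with (Rbar_mult 2 (Rbar_inv p_infty)) by (simpl; f_equal; ring).
  apply is_lim_seq_ext with (fun N => 2 * / (2 * INR N + (x + 3))).
  { intros N. unfold Rdiv. f_equal. f_equal. ring. }
  apply is_lim_seq_scal_l. apply is_lim_seq_inv. 2: discriminate.
  assert (H2 : is_lim_seq (fun N => 2 * INR N) p_infty).
  { apply is_lim_seq_le_p_loc with (fun N => INR N). exists 0%nat. intros n _. pose proof (pos_INR n). lra.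
    apply is_lim_seq_INR. }
  eapply is_lim_seq_plus. exact H2. apply is_lim_seq_const. reflexivity.
Qed.

Lemma hh_dup (x : R) : 0 < x < 1 -> hh (x / 2) + hh ((x + 1) / 2) = 2 * hh x.
Proof.
  intros Hx.
  assert (L1 : is_lim_seq (fun N => T (x / 2) N + T ((x + 1) / 2) N) (hh (x / 2) + hh ((x + 1) / 2))).
  { apply is_lim_seq_plus'; apply T_lim; lra. }
  assert (L2 : is_lim_seq (fun N => 2 * T x (2 * N + 1) + 2 / (x + 2 * INR N + 3)) (2 * hh x + 0)).
  { apply is_lim_seq_plus'. 2: apply lim_inv_lin; lra.
    apply is_lim_seq_scal_l with (a := 2) (lu := hh x) (u := fun N => T x (2 * N + 1)).
    apply (is_lim_seq_subseq (T x) (hh x) (fun N => 2 * N + 1)%nat).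
    apply eventually_subseq. intros n. lia. apply T_lim; auto. }
  assert (E : forall N, T (x / 2) N + T ((x + 1) / 2) N = 2 * T x (2 * N + 1) + 2 / (x + 2 * INR N + 3)).
  { intros N. apply T_dup; auto. }
  apply is_lim_seq_ext with (v := fun N => 2 * T x (2 * N + 1) + 2 / (x + 2 * INR N + 3)) in L1; auto.
  assert (U1 := is_lim_seq_unique _ _ L1). assert (U2 := is_lim_seq_unique _ _ L2).
  rewrite U1 in U2. injection U2. intros. lra.
Qed.

Lemma cot_dup (x : R) : 0 < x < 1 ->
  PI * cot (PI * (x / 2)) + PI * cot (PI * ((x + 1) / 2)) = 2 * (PI * cot (PI * x)).
Proof.
  intros Hx. pose proof PI_pos. set (t := PI * (x / 2)).
  assert (Ht : 0 < t < PI / 2) by (unfold t; split; nra).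
  assert (Hs : 0 < sin t) by (apply sin_gt_0; lra).
  assert (Hc : 0 < cos t) by (apply cos_gt_0; lra).
  replace (PI * ((x + 1) / 2)) with (t + PI / 2) by (unfold t; field).
  replace (PI * x) with (2 * t) by (unfold t; field).
  unfold cot. rewrite cos_plus, sin_plus, cos_PI2, sin_PI2, sin_2a, cos_2a.
  field. split; lra.
Qed.

Lemma Dfun_dup (x : R) : 0 < x < 1 -> Dfun (x / 2) + Dfun ((x + 1) / 2) = 2 * Dfun x.
Proof.
  intros Hx. rewrite !Dfun_eq by lra.
  assert (H1 := hh_dup x Hx). assert (H2 := cot_dup x Hx). lra.
Qed.

Lemma pow2_ge (n : nat) : INR n + 1 <= 2 ^ n.
Proof.
  induction n as [|n IH]. simpl. lra. rewrite S_INR. simpl. pose proof (pos_INR n).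
  assert (1 <= 2 ^ n) by (apply pow_R1_Rle; lra). lra.
Qed.

Lemma small_pow2 (d : R) : 0 < d -> exists n, / 2 ^ n < d.
Proof.
  intros Hd. destruct (archimed (/ d)) as [Hu _].
  set (n := Z.to_nat (Z.abs (up (/ d)))).
  assert (Hn : / d <= INR n).
  { unfold n. rewrite INR_IZR_INZ, Z2Nat.id by apply Z.abs_nonneg.
    rewrite abs_IZR. pose proof (Rle_abs (IZR (up (/ d)))). lra. }
  exists n. pose proof (pow2_ge n).
  assert (Hp : 0 < 2 ^ n) by (apply pow_lt; lra).
  assert (/ d < 2 ^ n) by lra.
  apply Rinv_lt_contravar in H0. rewrite Rinv_inv in H0. exact H0.
  apply Rmult_lt_0_compat. apply Rinv_0_lt_compat; auto. auto.
Qed.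

Lemma max_arg (F : R -> R) :
  (forall x, 0 <= x <= 1 -> continuous F x) -> F 0 = 0 ->
  (forall x, 0 <= x <= 1 -> F (x / 2) + F ((x + 1) / 2) = 2 * F x) ->
  forall x, 0 <= x <= 1 -> F x <= 0.
Proof.
  intros Hc H0 Hd.
  destruct (continuity_ab_maj F 0 1) as [Mx [HM HMx]]. lra.
  { intros c Hc'. apply continuity_pt_filterlim. apply Hc. auto. }
  assert (Hall : forall n, 0 <= Mx / 2 ^ n <= 1 /\ F (Mx / 2 ^ n) = F Mx).
  { induction n as [|n [IH1 IH2]].
    - simpl. rewrite Rdiv_1_r. auto.
    - set (y := Mx / 2 ^ n) in *.
      assert (Ey : Mx / 2 ^ S n = y / 2) by (unfold y; simpl; field; apply pow_nonzero; lra).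
      rewrite Ey. split. lra.
      assert (A := Hd y IH1). assert (B1 := HM (y / 2) ltac:(lra)). assert (B2 := HM ((y + 1) / 2) ltac:(lra)).
      lra. }
  intros x Hx. eapply Rle_trans. apply HM; auto.
  apply Rnot_lt_le. intros Hpos.
  assert (Hc0 := proj1 (filterlim_locally (F := locally 0) F (F 0)) (Hc 0 ltac:(lra))).
  destruct (Hc0 (mkposreal _ Hpos)) as [d Hdd].
  destruct (small_pow2 d (cond_pos d)) as [n Hn].
  destruct (Hall n) as [[Hn1 Hn2] Hn3].
  assert (Hb : ball 0 d (Mx / 2 ^ n)).
  { apply ball_R. rewrite Rminus_0_r, Rabs_pos_eq by lra.
    eapply Rle_lt_trans; [|exact Hn]. unfold Rdiv. rewrite <- (Rmult_1_l (/ 2 ^ n)) at 2.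
    apply Rmult_le_compat_r. apply Rlt_le, Rinv_0_lt_compat, pow_lt; lra. lra. }
  specialize (Hdd _ Hb).
  assert (Hd2 : Rabs (F (Mx / 2 ^ n) - F 0) < F Mx) by (apply ball_R; exact Hdd).
  rewrite H0, Hn3, Rminus_0_r in Hd2.
  rewrite Rabs_pos_eq in Hd2 by lra. lra.
Qed.

Lemma cont_zero (G : R -> R) (x0 : R) : continuous G x0 ->
  (forall d : posreal, exists y, Rabs (y - x0) < d /\ G y = 0) -> G x0 = 0.
Proof.
  intros Hc Hy. destruct (Req_EM_T (G x0) 0) as [E|Hn]; auto. exfalso.
  assert (Hp : 0 < Rabs (G x0)) by (apply Rabs_pos_lt; auto).
  destruct (proj1 (filterlim_locally (F := locally x0) G (G x0)) Hc (mkposreal _ Hp)) as [d Hd].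
  destruct (Hy d) as [y [Hy1 Hy2]].
  assert (Hb : ball x0 d y) by (apply ball_R; exact Hy1).
  specialize (Hd y Hb).
  assert (H2 : Rabs (G y - G x0) < Rabs (G x0)) by (apply ball_R; exact Hd).
  rewrite Hy2, Rminus_0_l, Rabs_Ropp in H2. lra.
Qed.

Definition Gd (x : R) : R := Dfun (x / 2) + Dfun ((x + 1) / 2) - 2 * Dfun x.

Lemma Gd_cont (x : R) : 0 <= x <= 1 -> continuous Gd x.
Proof.
  intros Hx. unfold Gd.
  apply (continuous_minus (V:=R_NormedModule)). apply (continuous_plus (V:=R_NormedModule)).
  - apply (continuous_comp (fun t => t / 2) Dfun).
    apply (ex_derive_continuous (K:=R_AbsRing) (V:=R_NormedModule)). auto_derive. auto.
    apply Dfun_cont. lra.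
  - apply (continuous_comp (fun t => (t + 1) / 2) Dfun).
    apply (ex_derive_continuous (K:=R_AbsRing) (V:=R_NormedModule)). auto_derive. auto.
    apply Dfun_cont. lra.
  - apply (continuous_scal_r (V:=R_NormedModule) 2). apply Dfun_cont. auto.
Qed.

Lemma Gd_zero (x : R) : 0 <= x <= 1 -> Gd x = 0.
Proof.
  intros Hx.
  assert (Hin : forall y, 0 < y < 1 -> Gd y = 0) by (intros y Hy; unfold Gd; rewrite Dfun_dup; auto; ring).
  destruct (Req_EM_T x 0) as [->|H0]; [|destruct (Req_EM_T x 1) as [->|H1]].
  - apply cont_zero. apply Gd_cont; lra. intros d. exists (Rmin (d / 2) (1 / 2)).
    assert (0 < Rmin (d / 2) (1 / 2)) by (apply Rmin_pos; [destruct d; simpl; lra| lra]).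
    pose proof (Rmin_l (d / 2) (1 / 2)). pose proof (Rmin_r (d / 2) (1 / 2)).
    split. rewrite Rminus_0_r, Rabs_pos_eq by lra. destruct d; simpl in *; lra. apply Hin. lra.
  - apply cont_zero. apply Gd_cont; lra. intros d. exists (1 - Rmin (d / 2) (1 / 2)).
    assert (0 < Rmin (d / 2) (1 / 2)) by (apply Rmin_pos; [destruct d; simpl; lra| lra]).
    pose proof (Rmin_l (d / 2) (1 / 2)). pose proof (Rmin_r (d / 2) (1 / 2)).
    split. replace (1 - Rmin (d / 2) (1 / 2) - 1) with (- Rmin (d / 2) (1 / 2)) by ring.
    rewrite Rabs_Ropp, Rabs_pos_eq by lra. destruct d; simpl in *; lra. apply Hin. lra.
  - apply Hin. lra.
Qed.

Lemma E2_0 : E2 0 = 0.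
Proof.
  unfold E2. rewrite (Series_ext _ (fun n => 0 * te 0 n)).
  rewrite Series_scal_l. ring. intros n. unfold te. unfold Rdiv. ring.
Qed.

Lemma Dfun_0 : Dfun 0 = 0.
Proof.
  unfold Dfun. destruct (Rlt_dec 0 (1 / 2)); [|lra]. unfold Db1. rewrite Rmult_0_r, kc_0, E2_0. field.
Qed.

Lemma Dfun_zero (x : R) : 0 <= x <= 1 -> Dfun x = 0.
Proof.
  intros Hx. apply Rle_antisym.
  - apply max_arg; auto. apply Dfun_cont. apply Dfun_0.
    intros y Hy. assert (H := Gd_zero y Hy). unfold Gd in H. lra.
  - assert (H : - Dfun x <= 0).
    { apply (max_arg (fun t => - Dfun t)); auto.
      intros y Hy. apply (continuous_opp (V:=R_NormedModule)). apply Dfun_cont. auto.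
      rewrite Dfun_0. ring.
      intros y Hy. assert (H := Gd_zero y Hy). unfold Gd in H. lra. }
    lra.
Qed.

Theorem cot_series (z : R) : 0 < z < 1 -> is_series (ta z) (PI * cot (PI * z) - 1 / z).
Proof.
  intros Hz. assert (HD := Dfun_zero z ltac:(lra)). rewrite Dfun_eq in HD by auto.
  replace (PI * cot (PI * z) - 1 / z) with (hh z - 1 / z) by lra.
  assert (H := T_lim z Hz). unfold T in H.
  unfold is_series. change (is_lim_seq (sum_n (ta z)) (hh z - 1 / z)).
  apply is_lim_seq_ext with (fun N => (1 / z + sum_f_R0 (ta z) N) - 1 / z).
  intros N. rewrite sum_n_Reals. ring.
  apply is_lim_seq_minus'. exact H. apply is_lim_seq_const.
Qed.

Definition pw (c u : R) : R := exp (c * ln u).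
Definition phi1 (a x : R) : R := pw a x * (1 - x).

Lemma pw_pos (c u : R) : 0 < pw c u.
Proof. apply exp_pos. Qed.

Lemma pw_Rpower (c u : R) : pw c u = Rpower u c.
Proof. reflexivity. Qed.

Lemma pw_S (c u : R) : 0 < u -> pw (c + 1) u = pw c u * u.
Proof. intros Hu. unfold pw. rewrite Rmult_plus_distr_r, Rmult_1_l, exp_plus, exp_ln; auto. Qed.

Lemma phi_eq (a x : R) : 0 < x -> phi a x = phi1 a x.
Proof.
  intros Hx. unfold phi, phi1. rewrite !rpow_pos by auto. rewrite <- !pw_Rpower.
  rewrite pw_S by auto. ring.
Qed.

Lemma phi_nonpos (a x : R) : x <= 0 -> phi a x = 0.
Proof. intros Hx. unfold phi, rpow. destruct (Rle_dec x 0); [ring| lra]. Qed.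

Lemma phi1_deriv (a x : R) : 0 < x ->
  derivable_pt_lim (phi1 a) x (pw a x * (a - (a + 1) * x) / x).
Proof.
  intros Hx. apply is_derive_Reals. unfold phi1, pw. auto_derive. auto. field. lra.
Qed.

Lemma phi1_decr (a : R) : 0 < a -> forall y1 y2, x0 a <= y1 -> y1 < y2 -> y2 <= 1 ->
  phi1 a y2 < phi1 a y1.
Proof.
  intros Ha y1 y2 H1 H2 H3. unfold x0 in H1.
  assert (Hy1 : 0 < y1) by (apply Rlt_le_trans with (a / (a + 1)); [apply Rdiv_lt_0_compat; lra| lra]).
  destruct (MVT_cor2 (phi1 a) (fun x => pw a x * (a - (a + 1) * x) / x) y1 y2 H2) as [c [Hc1 Hc2]].
  { intros c Hc. apply phi1_deriv. lra. }
  assert (Hc : (a + 1) * c > a).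
  { assert (a / (a + 1) < c) by lra. apply Rmult_lt_compat_l with (r := a + 1) in H; [|lra].
    replace ((a + 1) * (a / (a + 1))) with a in H by (field; lra). lra. }
  assert (pw a c * (a - (a + 1) * c) / c < 0).
  { unfold Rdiv. assert (0 < / c) by (apply Rinv_0_lt_compat; lra). pose proof (pw_pos a c).
    assert (pw a c * (a - (a + 1) * c) < 0) by nra. nra. }
  nra.
Qed.

Lemma phi1_incr (a : R) : 0 < a -> forall y1 y2, 0 < y1 -> y1 < y2 -> y2 <= x0 a ->
  phi1 a y1 < phi1 a y2.
Proof.
  intros Ha y1 y2 H1 H2 H3. unfold x0 in H3.
  destruct (MVT_cor2 (phi1 a) (fun x => pw a x * (a - (a + 1) * x) / x) y1 y2 H2) as [c [Hc1 Hc2]].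
  { intros c Hc. apply phi1_deriv. lra. }
  assert (Hc : (a + 1) * c < a).
  { assert (c < a / (a + 1)) by lra. apply Rmult_lt_compat_l with (r := a + 1) in H; [|lra].
    replace ((a + 1) * (a / (a + 1))) with a in H by (field; lra). lra. }
  assert (0 < pw a c * (a - (a + 1) * c) / c).
  { unfold Rdiv. assert (0 < / c) by (apply Rinv_0_lt_compat; lra). pose proof (pw_pos a c).
    assert (0 < pw a c * (a - (a + 1) * c)) by nra. nra. }
  nra.
Qed.

Lemma x0_range (a : R) : 0 < a -> 0 < x0 a < 1.
Proof.
  intros Ha. unfold x0. split. apply Rdiv_lt_0_compat; lra.
  apply Rmult_lt_reg_r with (a + 1). lra. unfold Rdiv. rewrite Rmult_assoc, Rinv_l by lra. lra.
Qed.

Definition Mx (a : R) : R := phi1 a (x0 a).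

Lemma phi1_decr_w (a : R) : 0 < a -> forall s t, x0 a <= s -> s <= t -> t <= 1 -> phi1 a t <= phi1 a s.
Proof.
  intros Ha s t H1 H2 H3. destruct (Req_EM_T s t) as [->|Hn]. lra.
  apply Rlt_le, phi1_decr; auto. lra.
Qed.

Lemma phi1_1 (a : R) : phi1 a 1 = 0.
Proof. unfold phi1. ring. Qed.

Lemma phi1_range (a x : R) : 0 < a -> 0 < x <= 1 -> 0 <= phi1 a x <= Mx a.
Proof.
  intros Ha Hx. pose proof (x0_range a Ha). split.
  - unfold phi1. pose proof (pw_pos a x). nra.
  - unfold Mx. destruct (Rle_lt_dec x (x0 a)).
    + destruct (Req_EM_T x (x0 a)) as [->|]. lra. apply Rlt_le. apply phi1_incr; auto; lra.
    + apply phi1_decr_w; auto; lra.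
Qed.

Lemma phi1_cont (a x : R) : 0 < x -> continuous (phi1 a) x.
Proof.
  intros Hx. apply (ex_derive_continuous (K:=R_AbsRing) (V:=R_NormedModule)).
  unfold phi1, pw. auto_derive. auto.
Qed.

Lemma r_inv_exists (a v : R) : 0 < a -> 0 <= v <= Mx a -> exists y, x0 a <= y <= 1 /\ phi a y = v.
Proof.
  intros Ha Hv. pose proof (x0_range a Ha).
  destruct (Req_EM_T v (Mx a)) as [->|HM].
  { exists (x0 a). split. lra. rewrite phi_eq by lra. reflexivity. }
  destruct (Req_EM_T v 0) as [->|H0].
  { exists 1. split. lra. rewrite phi_eq by lra. apply phi1_1. }
  destruct (Ranalysis5.IVT_interv (fun t => v - phi1 a t) (x0 a) 1) as [z [Hz1 Hz2]].
  - intros t Ht. apply continuity_pt_filterlim.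
    apply (continuous_minus (V:=R_NormedModule)). apply continuous_const. apply phi1_cont. lra.
  - lra.
  - unfold Mx in *. lra.
  - rewrite phi1_1. lra.
  - exists z. split. lra. rewrite phi_eq by lra. lra.
Qed.

Lemma r_inv_spec (a v : R) : 0 < a -> 0 <= v <= Mx a ->
  x0 a <= r_inv a v <= 1 /\ phi1 a (r_inv a v) = v.
Proof.
  intros Ha Hv. pose proof (x0_range a Ha).
  assert (Hs := epsilon_spec (inhabits 0) (fun y => x0 a <= y <= 1 /\ phi a y = v) (r_inv_exists a v Ha Hv)).
  fold (r_inv a v) in Hs. destruct Hs as [H1 H2]. split; auto. rewrite <- phi_eq; auto. lra.
Qed.

Lemma phi1_inj (a : R) : 0 < a -> forall s t, x0 a <= s <= 1 -> x0 a <= t <= 1 -> phi1 a s = phi1 a t -> s = t.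
Proof.
  intros Ha s t Hs Ht E. destruct (Rtotal_order s t) as [Hl|[He|Hg]]; auto.
  - assert (phi1 a t < phi1 a s) by (apply phi1_decr; lra). lra.
  - assert (phi1 a s < phi1 a t) by (apply phi1_decr; lra). lra.
Qed.

Lemma r_inv_char (a v y : R) : 0 < a -> x0 a <= y <= 1 -> phi1 a y = v -> r_inv a v = y.
Proof.
  intros Ha Hy E. pose proof (x0_range a Ha).
  assert (Hv : 0 <= v <= Mx a) by (rewrite <- E; apply phi1_range; auto; lra).
  destruct (r_inv_spec a v Ha Hv) as [H1 H2]. apply (phi1_inj a Ha); auto. lra.
Qed.

Lemma g_id (a x : R) : 0 < a -> x0 a <= x <= 1 -> g a x = x.
Proof.
  intros Ha Hx. pose proof (x0_range a Ha). unfold g. apply r_inv_char; auto.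
  symmetry. apply phi_eq. lra.
Qed.

Lemma phi_range (a x : R) : 0 < a -> x <= 1 -> 0 <= phi a x <= Mx a.
Proof.
  intros Ha Hx. destruct (Rle_lt_dec x 0).
  - rewrite phi_nonpos by auto. pose proof (phi1_range a (x0 a) Ha). pose proof (x0_range a Ha).
    unfold Mx. split. lra. apply H. lra.
  - rewrite phi_eq by auto. apply phi1_range; auto.
Qed.

Lemma g_range (a x : R) : 0 < a -> x <= 1 -> x0 a <= g a x <= 1.
Proof.
  intros Ha Hx. unfold g. apply r_inv_spec; auto. apply phi_range; auto.
Qed.

Lemma R_cont (a v : R) : 0 < a -> 0 <= v <= Mx a -> forall eps, 0 < eps ->
  exists d, 0 < d /\ forall v', 0 <= v' <= Mx a -> Rabs (v' - v) < d -> Rabs (r_inv a v' - r_inv a v) < eps.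
Proof.
  intros Ha Hv eps He. pose proof (x0_range a Ha).
  destruct (r_inv_spec a v Ha Hv) as [Hy Ey]. set (y := r_inv a v) in *.
  assert (Hlow : exists d1, 0 < d1 /\ forall y', x0 a <= y' <= 1 -> phi1 a y' < v + d1 -> y - eps < y').
  { destruct (Req_EM_T y (x0 a)) as [Eq|Hne].
    - exists 1. split. lra. intros y' Hy' _. lra.
    - set (yl := Rmax (x0 a) (y - eps / 2)).
      assert (Hyl : x0 a <= yl < y /\ y - eps / 2 <= yl).
      { unfold yl, Rmax. destruct (Rle_dec (x0 a) (y - eps / 2)); lra. }
      assert (Hp : v < phi1 a yl) by (rewrite <- Ey; apply phi1_decr; lra).
      exists (phi1 a yl - v). split. lra. intros y' Hy' Hv'.
      apply Rnot_le_lt. intros Hc.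
      assert (phi1 a yl <= phi1 a y') by (apply phi1_decr_w; lra). lra. }
  assert (Hup : exists d2, 0 < d2 /\ forall y', x0 a <= y' <= 1 -> v - d2 < phi1 a y' -> y' < y + eps).
  { destruct (Req_EM_T y 1) as [Eq|Hne].
    - exists 1. split. lra. intros y' Hy' _. lra.
    - set (yh := Rmin 1 (y + eps / 2)).
      assert (Hyh : y < yh <= 1 /\ yh <= y + eps / 2).
      { unfold yh, Rmin. destruct (Rle_dec 1 (y + eps / 2)); lra. }
      assert (Hp : phi1 a yh < v) by (rewrite <- Ey; apply phi1_decr; lra).
      exists (v - phi1 a yh). split. lra. intros y' Hy' Hv'.
      apply Rnot_le_lt. intros Hc.
      assert (phi1 a y' <= phi1 a yh) by (apply phi1_decr_w; lra). lra. }
  destruct Hlow as [d1 [Hd1 Hl]]. destruct Hup as [d2 [Hd2 Hu]].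
  exists (Rmin d1 d2). split. apply Rmin_pos; auto.
  intros v' Hv' Hd. pose proof (Rmin_l d1 d2). pose proof (Rmin_r d1 d2).
  destruct (r_inv_spec a v' Ha Hv') as [Hy' Ey'].
  apply Rabs_def2 in Hd. apply Rabs_def1.
  - assert (r_inv a v' < y + eps) by (apply Hu; auto; lra). lra.
  - assert (y - eps < r_inv a v') by (apply Hl; auto; lra). lra.
Qed.

Lemma phi_cont (a x : R) : 0 < a -> 0 <= x < 1 -> continuous (phi a) x.
Proof.
  intros Ha Hx. destruct (Req_EM_T x 0) as [->|Hn].
  - apply filterlim_locally. intros eps.
    assert (Hd : 0 < Rmin 1 (Rpower eps (/ a))) by (apply Rmin_pos; [lra| apply Rpower_pos]).
    exists (mkposreal _ Hd). intros y Hy.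
    assert (Hy1 : Rabs (y - 0) < Rmin 1 (Rpower eps (/ a))) by (apply ball_R; exact Hy).
    apply ball_R. rewrite (phi_nonpos a 0) by lra. rewrite Rminus_0_r in *.
    pose proof (Rmin_l 1 (Rpower eps (/ a))). pose proof (Rmin_r 1 (Rpower eps (/ a))).
    apply Rabs_def2 in Hy1.
    destruct (Rle_lt_dec y 0).
    + rewrite phi_nonpos by auto. rewrite Rabs_R0. apply cond_pos.
    + rewrite phi_eq by auto. unfold phi1. rewrite Rabs_pos_eq by (pose proof (pw_pos a y); nra).
      assert (pw a y < eps).
      { rewrite pw_Rpower. assert (E : Rpower (Rpower eps (/ a)) a = eps).
        { rewrite Rpower_mult. replace (/ a * a) with 1 by (field; lra). apply Rpower_1. apply cond_pos. }
        rewrite <- E. apply Rlt_Rpower_l. lra. split; lra. }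
      pose proof (pw_pos a y). nra.
  - apply continuous_ext_loc with (phi1 a).
    + assert (Hp : 0 < x) by lra. apply filter_imp with (2 := locally_pos x Hp).
      intros y Hy. symmetry. apply phi_eq. auto.
    + apply phi1_cont. lra.
Qed.

Lemma g_cont (a x : R) : 0 < a -> 0 <= x <= x0 a -> continuous (g a) x.
Proof.
  intros Ha Hx. pose proof (x0_range a Ha).
  apply filterlim_locally. intros eps.
  assert (Hv : 0 <= phi a x <= Mx a) by (apply phi_range; lra).
  destruct (R_cont a (phi a x) Ha Hv eps (cond_pos eps)) as [d [Hd Hdd]].
  assert (Hpc := phi_cont a x Ha ltac:(lra)).
  destruct (proj1 (filterlim_locally (F := locally x) (phi a) (phi a x)) Hpc (mkposreal d Hd)) as [d1 Hd1].
  assert (Hr : 0 < Rmin d1 (1 - x0 a)) by (apply Rmin_pos; [apply cond_pos| lra]).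
  exists (mkposreal _ Hr). intros y Hy.
  assert (Hy1 : Rabs (y - x) < Rmin d1 (1 - x0 a)) by (apply ball_R; exact Hy).
  pose proof (Rmin_l d1 (1 - x0 a)). pose proof (Rmin_r d1 (1 - x0 a)).
  assert (Hb : ball x d1 y) by (apply ball_R; lra).
  specialize (Hd1 y Hb).
  assert (Hd2 : Rabs (phi a y - phi a x) < d) by (apply ball_R; exact Hd1).
  apply ball_R. unfold g. apply Hdd; auto.
  apply phi_range; auto. apply Rabs_def2 in Hy1. lra.
Qed.

Definition Yf (a u : R) : R := (1 - pw a u) / (1 - u * pw a u).
Definition Xf (a u : R) : R := u * Yf a u.
Definition wf (a u : R) : R := pw a u / u * (1 - u ^ 2) / (1 - u * pw a u).
Definition Yd (a u : R) : R :=
  (- (a * pw a u / u) * (1 - u * pw a u) + (1 - pw a u) * ((a + 1) * pw a u)) / (1 - u * pw a u) ^ 2.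
Definition Xd (a u : R) : R := Yf a u + u * Yd a u.
Definition Ff (a u : R) : R := u * Yf a u ^ 2 / 2 - (1 - u) * (1 + Yf a u) / (2 * (a + 1)).
Definition Fd (a u : R) : R := Xd a u * Yf a u - (1 / 2 - 1 / (a + 1)) + a / (2 * (a + 1)) * wf a u.

Lemma pw_lt1 (a u : R) : 0 < a -> 0 < u < 1 -> pw a u < 1.
Proof.
  intros Ha Hu. unfold pw. rewrite <- exp_0. apply exp_increasing.
  assert (ln u < 0) by (rewrite <- ln_1; apply ln_increasing; lra). nra.
Qed.

Lemma den_pos (a u : R) : 0 < a -> 0 < u < 1 -> 0 < 1 - u * pw a u.
Proof. intros Ha Hu. pose proof (pw_lt1 a u Ha Hu). pose proof (pw_pos a u). nra. Qed.

Lemma pw_1 (a : R) : pw a 1 = 1.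
Proof. unfold pw. rewrite ln_1, Rmult_0_r. apply exp_0. Qed.

Lemma qpos (a u : R) : 0 < a -> 0 < u < 1 -> 0 < 1 - (a + 1) * pw a u + a * u * pw a u.
Proof.
  intros Ha Hu.
  set (qf := fun t => 1 - (a + 1) * pw a t + a * t * pw a t).
  destruct (MVT_cor2 qf (fun t => a * (a + 1) * pw a t * (t - 1) / t) u 1) as [c [Hc1 Hc2]]. lra.
  { intros c Hc. apply is_derive_Reals. unfold qf, pw. auto_derive. lra. field. lra. }
  unfold qf in Hc1. rewrite pw_1 in Hc1.
  assert (0 < / c) by (apply Rinv_0_lt_compat; lra). pose proof (pw_pos a c).
  assert (Hneg : a * (a + 1) * pw a c * (c - 1) / c = - (a * (a + 1) * pw a c * (1 - c) * / c)) by (unfold Rdiv; ring).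
  assert (0 < a * (a + 1) * pw a c * (1 - c) * / c) by (repeat apply Rmult_lt_0_compat; lra).
  unfold qf. nra.
Qed.

Lemma rpos (a u : R) : 0 < a -> 0 < u < 1 -> 0 < a - (a + 1) * u + u * pw a u.
Proof.
  intros Ha Hu.
  set (rf := fun t => a - (a + 1) * t + t * pw a t).
  destruct (MVT_cor2 rf (fun t => (a + 1) * (pw a t - 1)) u 1) as [c [Hc1 Hc2]]. lra.
  { intros c Hc. apply is_derive_Reals. unfold rf, pw. auto_derive. lra. field. lra. }
  unfold rf in Hc1. rewrite pw_1 in Hc1.
  assert (pw a c < 1) by (apply pw_lt1; lra).
  assert (0 < (a + 1) * (1 - pw a c) * (1 - u)) by (repeat apply Rmult_lt_0_compat; lra).
  unfold rf. lra.
Qed.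

Lemma Yf_range (a u : R) : 0 < a -> 0 < u < 1 -> x0 a < Yf a u < 1.
Proof.
  intros Ha Hu. pose proof (den_pos a u Ha Hu). pose proof (pw_pos a u). pose proof (pw_lt1 a u Ha Hu).
  unfold Yf, x0. split.
  - apply Rmult_lt_reg_r with ((a + 1) * (1 - u * pw a u)). nra.
    replace (a / (a + 1) * ((a + 1) * (1 - u * pw a u))) with (a * (1 - u * pw a u)) by (field; lra).
    replace ((1 - pw a u) / (1 - u * pw a u) * ((a + 1) * (1 - u * pw a u))) with ((a + 1) * (1 - pw a u)) by (field; lra).
    pose proof (qpos a u Ha Hu). nra.
  - apply Rmult_lt_reg_r with (1 - u * pw a u). auto.
    replace ((1 - pw a u) / (1 - u * pw a u) * (1 - u * pw a u)) with (1 - pw a u) by (field; lra). nra.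
Qed.

Lemma Xf_range (a u : R) : 0 < a -> 0 < u < 1 -> 0 < Xf a u < x0 a.
Proof.
  intros Ha Hu. pose proof (den_pos a u Ha Hu). pose proof (pw_pos a u). pose proof (pw_lt1 a u Ha Hu).
  pose proof (Yf_range a u Ha Hu). pose proof (x0_range a Ha).
  unfold Xf. split. nra.
  unfold Yf, x0. apply Rmult_lt_reg_r with ((a + 1) * (1 - u * pw a u)). nra.
  replace (a / (a + 1) * ((a + 1) * (1 - u * pw a u))) with (a * (1 - u * pw a u)) by (field; lra).
  replace (u * ((1 - pw a u) / (1 - u * pw a u)) * ((a + 1) * (1 - u * pw a u))) with ((a + 1) * u * (1 - pw a u)) by (field; lra).
  pose proof (rpos a u Ha Hu). nra.
Qed.

Lemma pw_mult (a u v : R) : 0 < u -> 0 < v -> pw a (u * v) = pw a u * pw a v.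
Proof. intros Hu Hv. unfold pw. rewrite ln_mult by auto. rewrite <- exp_plus. f_equal. ring. Qed.

Lemma g_Xf (a u : R) : 0 < a -> 0 < u < 1 -> g a (Xf a u) = Yf a u.
Proof.
  intros Ha Hu. pose proof (Yf_range a u Ha Hu). pose proof (Xf_range a u Ha Hu). pose proof (x0_range a Ha).
  unfold g. rewrite phi_eq by lra. apply r_inv_char; auto. lra.
  unfold phi1, Xf. rewrite pw_mult by lra. pose proof (den_pos a u Ha Hu).
  unfold Yf. field. lra.
Qed.

Lemma Xf_deriv (a u : R) : 0 < a -> 0 < u < 1 -> is_derive (Xf a) u (Xd a u).
Proof.
  intros Ha Hu. pose proof (den_pos a u Ha Hu).
  unfold Xf, Xd, Yd, Yf, pw in *. auto_derive.
  - repeat split; lra.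
  - field. split; lra.
Qed.

Lemma Ff_deriv (a u : R) : 0 < a -> 0 < u < 1 -> is_derive (Ff a) u (Fd a u).
Proof.
  intros Ha Hu. pose proof (den_pos a u Ha Hu).
  unfold Ff, Fd, Xd, Yd, Yf, wf, pw in *. auto_derive.
  - repeat split; lra.
  - field. repeat split; lra.
Qed.

Lemma Xd_cont (a u : R) : 0 < a -> 0 < u < 1 -> continuous (Xd a) u.
Proof.
  intros Ha Hu. pose proof (den_pos a u Ha Hu).
  apply (ex_derive_continuous (K:=R_AbsRing) (V:=R_NormedModule)).
  unfold Xd, Yd, Yf, pw in *. auto_derive. repeat split; try lra; try (intro; nra); auto.
Qed.

Lemma Fd_cont (a u : R) : 0 < a -> 0 < u < 1 -> continuous (Fd a) u.
Proof.
  intros Ha Hu. pose proof (den_pos a u Ha Hu).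
  apply (ex_derive_continuous (K:=R_AbsRing) (V:=R_NormedModule)).
  unfold Fd, Xd, Yd, Yf, wf, pw in *. auto_derive. repeat split; try lra; try (intro; nra); auto.
Qed.

Lemma wf_cont (a u : R) : 0 < a -> 0 < u < 1 -> continuous (wf a) u.
Proof.
  intros Ha Hu. pose proof (den_pos a u Ha Hu).
  apply (ex_derive_continuous (K:=R_AbsRing) (V:=R_NormedModule)).
  unfold wf, pw in *. auto_derive. repeat split; try lra; try (intro; nra); auto.
Qed.

Lemma in_01 (d u : R) : 0 < d < 1 / 2 -> Rmin d (1 - d) <= u <= Rmax d (1 - d) -> 0 < u < 1.
Proof.
  intros Hd Hu. rewrite Rmin_left, Rmax_right in Hu by lra. lra.
Qed.

Lemma wf_ex (a d : R) : 0 < a -> 0 < d < 1 / 2 -> ex_RInt (wf a) d (1 - d).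
Proof.
  intros Ha Hd. apply (ex_RInt_continuous (V:=R_CompleteNormedModule)). intros z Hz.
  apply wf_cont; auto. eapply in_01; eauto.
Qed.

Lemma key_int (a d : R) : 0 < a -> 0 < d < 1 / 2 ->
  RInt (g a) (Xf a d) (Xf a (1 - d)) =
  (1 / 2 - 1 / (a + 1)) * (1 - 2 * d) + (Ff a (1 - d) - Ff a d) - a / (2 * (a + 1)) * RInt (wf a) d (1 - d).
Proof.
  intros Ha Hd. pose proof (x0_range a Ha).
  assert (H1 := is_RInt_comp (V:=R_CompleteNormedModule) (g a) (Xf a) (Xd a) d (1 - d)).
  assert (H1' : is_RInt (fun u => Xd a u * Yf a u) d (1 - d) (RInt (g a) (Xf a d) (Xf a (1 - d)))).
  { eapply is_RInt_ext; [| apply H1].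
    - intros x Hx. assert (0 < x < 1) by (eapply in_01; eauto; lra).
      simpl. rewrite g_Xf by auto. reflexivity.
    - intros x Hx. assert (0 < x < 1) by (eapply in_01; eauto). apply g_cont; auto.
      pose proof (Xf_range a x Ha H0). lra.
    - intros x Hx. assert (0 < x < 1) by (eapply in_01; eauto). split. apply Xf_deriv; auto. apply Xd_cont; auto. }
  set (c := 1 / 2 - 1 / (a + 1)). set (k := a / (2 * (a + 1))).
  assert (Hc := is_RInt_const (V:=R_NormedModule) d (1 - d) c).
  assert (HF : is_RInt (Fd a) d (1 - d) (Ff a (1 - d) - Ff a d)).
  { apply FTC. intros x Hx. apply Ff_deriv; auto. eapply in_01; eauto.
    intros x Hx. apply Fd_cont; auto. eapply in_01; eauto. }
  assert (Hw := RInt_correct (V:=R_CompleteNormedModule) _ _ _ (wf_ex a d Ha Hd)).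
  assert (Hw' := is_RInt_scal (V:=R_NormedModule) _ _ _ k _ Hw).
  assert (Hs := is_RInt_minus (V:=R_NormedModule) _ _ _ _ _ _ (is_RInt_plus (V:=R_NormedModule) _ _ _ _ _ _ Hc HF) Hw').
  assert (H2 : is_RInt (fun u => Xd a u * Yf a u) d (1 - d)
     (minus (plus (scal (1 - d - d) c) (Ff a (1 - d) - Ff a d)) (scal k (RInt (wf a) d (1 - d))))).
  { eapply is_RInt_ext; [| exact Hs]. intros x Hx. assert (0 < x < 1) by (eapply in_01; eauto; lra).
    unfold Fd, minus, plus, scal, opp; simpl. unfold mult; simpl. fold c k. ring. }
  rewrite <- (is_RInt_unique _ _ _ _ H1'). rewrite (is_RInt_unique _ _ _ _ H2).
  unfold minus, plus, scal, opp; simpl. unfold mult; simpl. ring.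
Qed.

Section Lims.
Context {T : Type} {F : (T -> Prop) -> Prop} {FF : Filter F}.

Lemma lim_plus (f h : T -> R) (lf lh : R) :
  filterlim f F (locally lf) -> filterlim h F (locally lh) -> filterlim (fun x => f x + h x) F (locally (lf + lh)).
Proof.
  intros H1 H2. eapply filterlim_comp_2; [exact H1| exact H2|].
  apply (filterlim_Rbar_plus lf lh (lf + lh)). reflexivity.
Qed.

Lemma lim_mult (f h : T -> R) (lf lh : R) :
  filterlim f F (locally lf) -> filterlim h F (locally lh) -> filterlim (fun x => f x * h x) F (locally (lf * lh)).
Proof.
  intros H1 H2. eapply filterlim_comp_2; [exact H1| exact H2|].
  apply (filterlim_Rbar_mult lf lh (lf * lh)). reflexivity.
Qed.

Lemma lim_const (c : R) : filterlim (fun _ => c) F (locally c).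
Proof. apply filterlim_const. Qed.

Lemma lim_opp (f : T -> R) (lf : R) : filterlim f F (locally lf) -> filterlim (fun x => - f x) F (locally (- lf)).
Proof.
  intros H. apply filterlim_ext with (fun x => (-1) * f x). intros; ring.
  replace (- lf) with ((-1) * lf) by ring. apply lim_mult; auto. apply lim_const.
Qed.

Lemma lim_minus (f h : T -> R) (lf lh : R) :
  filterlim f F (locally lf) -> filterlim h F (locally lh) -> filterlim (fun x => f x - h x) F (locally (lf - lh)).
Proof. intros H1 H2. apply lim_plus; auto. apply lim_opp; auto. Qed.

Lemma lim_inv (f : T -> R) (lf : R) : lf <> 0 ->
  filterlim f F (locally lf) -> filterlim (fun x => / f x) F (locally (/ lf)).
Proof.
  intros Hl H. eapply filterlim_comp; [exact H|].
  apply (filterlim_Rbar_inv lf). intros E. apply Hl. injection E; auto.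
Qed.

Lemma lim_div (f h : T -> R) (lf lh : R) : lh <> 0 ->
  filterlim f F (locally lf) -> filterlim h F (locally lh) -> filterlim (fun x => f x / h x) F (locally (lf / lh)).
Proof. intros Hl H1 H2. apply lim_mult; auto. apply lim_inv; auto. Qed.

Lemma lim_ext (f h : T -> R) (l : R) : F (fun x => f x = h x) -> filterlim f F (locally l) -> filterlim h F (locally l).
Proof. intros E H. eapply filterlim_ext_loc; eauto. Qed.

Lemma lim_squeeze0 (f h : T -> R) : F (fun x => Rabs (f x) <= h x) -> filterlim h F (locally 0) -> filterlim f F (locally 0).
Proof.
  intros Hb Hh. apply filterlim_locally. intros eps.
  assert (H := proj1 (filterlim_locally h 0) Hh eps).
  eapply filter_imp; [| apply filter_and; [exact Hb| exact H]].
  intros x [H1 H2]. apply ball_R.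
  assert (H3 : Rabs (h x - 0) < eps) by (apply ball_R; exact H2). rewrite Rminus_0_r in *.
  apply Rabs_def2 in H3. lra.
Qed.

End Lims.

Lemma lim_id0 : filterlim (fun d : R => d) (at_right 0) (locally 0).
Proof. eapply filterlim_filter_le_1. apply filter_le_within. apply filterlim_id. Qed.

Lemma ev_small (P : R -> Prop) (e : R) : 0 < e -> (forall d, 0 < d < e -> P d) -> at_right 0 P.
Proof.
  intros He HP. exists (mkposreal e He). intros y Hy Hy0.
  assert (Hy1 : Rabs (y - 0) < e) by (apply ball_R; exact Hy). rewrite Rminus_0_r in Hy1.
  apply Rabs_def2 in Hy1. apply HP. lra.
Qed.

Lemma lim_cont0 (h : R -> R) : continuous h 0 -> filterlim h (at_right 0) (locally (h 0)).
Proof. intros H. eapply filterlim_filter_le_1. apply filter_le_within. exact H. Qed.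

Lemma lim_pw0 (c : R) : 0 < c -> filterlim (fun d => pw c d) (at_right 0) (locally 0).
Proof.
  intros Hc. apply filterlim_locally. intros eps.
  apply (ev_small _ (Rpower eps (/ c))). apply Rpower_pos. intros d Hd.
  apply ball_R. rewrite Rminus_0_r. rewrite Rabs_pos_eq by apply Rlt_le, pw_pos.
  rewrite pw_Rpower. assert (E : Rpower (Rpower eps (/ c)) c = eps).
  { rewrite Rpower_mult. replace (/ c * c) with 1 by (field; lra). apply Rpower_1. apply cond_pos. }
  rewrite <- E. apply Rlt_Rpower_l. lra. lra.
Qed.

Lemma lim_1m (h : R -> R) (l : R) : continuous h 1 -> h 1 = l -> filterlim (fun d => h (1 - d)) (at_right 0) (locally l).
Proof.
  intros Hc <-. eapply filterlim_comp with (G := locally 1).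
  - replace 1 with (1 - 0) at 2 by ring. apply lim_minus. apply lim_const. apply lim_id0.
  - exact Hc.
Qed.

Lemma lim_val {T} {F : (T -> Prop) -> Prop} (f : T -> R) (l l' : R) : l = l' -> filterlim f F (locally l) -> filterlim f F (locally l').
Proof. intros <-; auto. Qed.

Lemma pw_cont (c u : R) : 0 < u -> continuous (pw c) u.
Proof.
  intros Hu. apply (ex_derive_continuous (K:=R_AbsRing) (V:=R_NormedModule)). unfold pw. auto_derive. auto.
Qed.

Lemma lim_Y0 (a : R) : 0 < a -> filterlim (fun d => Yf a d) (at_right 0) (locally 1).
Proof.
  intros Ha. unfold Yf. apply (lim_val _ ((1 - 0) / (1 - 0 * 0))). field.
  apply lim_div. lra. apply lim_minus. apply lim_const. apply lim_pw0; auto.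
  apply lim_minus. apply lim_const. apply lim_mult. apply lim_id0. apply lim_pw0; auto.
Qed.

Lemma lim_X0 (a : R) : 0 < a -> filterlim (fun d => Xf a d) (at_right 0) (locally 0).
Proof.
  intros Ha. unfold Xf. apply (lim_val _ (0 * 1)). ring. apply lim_mult. apply lim_id0. apply lim_Y0; auto.
Qed.

Lemma lim_F0 (a : R) : 0 < a -> filterlim (fun d => Ff a d) (at_right 0) (locally (- 1 / (a + 1))).
Proof.
  intros Ha. unfold Ff.
  apply filterlim_ext with (fun d => d * (Yf a d * Yf a d) / 2 - (1 - d) * (1 + Yf a d) / (2 * (a + 1))).
  { intros d. simpl. unfold Rdiv. ring. }
  apply (lim_val _ (0 * (1 * 1) / 2 - (1 - 0) * (1 + 1) / (2 * (a + 1)))). field; lra.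
  apply lim_minus; apply lim_div; try lra.
  - apply lim_mult. apply lim_id0. apply lim_mult; apply lim_Y0; auto.
  - apply lim_const.
  - apply lim_mult. apply lim_minus. apply lim_const. apply lim_id0. apply lim_plus. apply lim_const. apply lim_Y0; auto.
  - apply lim_const.
Qed.

Lemma dq_lim (f : R -> R) (l : R) : derivable_pt_lim f 1 l ->
  filterlim (fun d => (f 1 - f (1 - d)) / d) (at_right 0) (locally l).
Proof.
  intros Hd. apply filterlim_locally. intros eps.
  destruct (Hd eps (cond_pos eps)) as [del Hdel].
  apply (ev_small _ del (cond_pos del)). intros d Hd0.
  apply ball_R. specialize (Hdel (- d)).
  replace ((f 1 - f (1 - d)) / d) with ((f (1 + - d) - f 1) / - d).
  apply Hdel. lra. rewrite Rabs_Ropp, Rabs_pos_eq; lra.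
  replace (1 + - d) with (1 - d) by ring. field. lra.
Qed.

Lemma lim_Y1 (a : R) : 0 < a -> filterlim (fun d => Yf a (1 - d)) (at_right 0) (locally (x0 a)).
Proof.
  intros Ha.
  assert (Q1 : filterlim (fun d => (pw a 1 - pw a (1 - d)) / d) (at_right 0) (locally a)).
  { apply dq_lim. apply is_derive_Reals. unfold pw. auto_derive. lra. rewrite ln_1, Rmult_0_r, exp_0. field. }
  assert (Q2 : filterlim (fun d => ((fun t => t * pw a t) 1 - (fun t => t * pw a t) (1 - d)) / d) (at_right 0) (locally (a + 1))).
  { apply (dq_lim (fun t => t * pw a t)). apply is_derive_Reals. unfold pw. auto_derive. lra. rewrite ln_1, Rmult_0_r, exp_0. field. }
  unfold x0. eapply lim_ext; [| apply lim_div; [lra| exact Q1| exact Q2]].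
  apply (ev_small _ 1). lra. intros d Hd. simpl. rewrite pw_1.
  pose proof (den_pos a (1 - d) Ha ltac:(lra)). unfold Yf. field. lra.
Qed.

Lemma lim_X1 (a : R) : 0 < a -> filterlim (fun d => Xf a (1 - d)) (at_right 0) (locally (x0 a)).
Proof.
  intros Ha. unfold Xf. apply (lim_val _ ((1 - 0) * x0 a)). ring.
  apply lim_mult. apply lim_minus. apply lim_const. apply lim_id0. apply lim_Y1; auto.
Qed.

Lemma lim_F1 (a : R) : 0 < a -> filterlim (fun d => Ff a (1 - d)) (at_right 0) (locally (x0 a ^ 2 / 2)).
Proof.
  intros Ha. unfold Ff.
  apply filterlim_ext with (fun d => (1 - d) * (Yf a (1 - d) * Yf a (1 - d)) / 2 - (1 - (1 - d)) * (1 + Yf a (1 - d)) / (2 * (a + 1))).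
  { intros d. simpl. unfold Rdiv. ring. }
  apply (lim_val _ ((1 - 0) * (x0 a * x0 a) / 2 - (1 - (1 - 0)) * (1 + x0 a) / (2 * (a + 1)))). field; lra.
  apply lim_minus; apply lim_div; try lra.
  - apply lim_mult. apply lim_minus. apply lim_const. apply lim_id0. apply lim_mult; apply lim_Y1; auto.
  - apply lim_const.
  - apply lim_mult. apply lim_minus. apply lim_const. apply lim_minus. apply lim_const. apply lim_id0.
    apply lim_plus. apply lim_const. apply lim_Y1; auto.
  - apply lim_const.
Qed.

Lemma g_ex (a s t : R) : 0 < a -> 0 <= s <= x0 a -> 0 <= t <= x0 a -> ex_RInt (g a) s t.
Proof.
  intros Ha Hs Ht. apply (ex_RInt_continuous (V:=R_CompleteNormedModule)). intros z Hz.
  apply g_cont; auto. unfold Rmin, Rmax in Hz. destruct (Rle_dec s t); lra.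
Qed.

Lemma g_abs (a t : R) : 0 < a -> t <= 1 -> Rabs (g a t) <= 1.
Proof.
  intros Ha Ht. pose proof (g_range a t Ha Ht). pose proof (x0_range a Ha).
  rewrite Rabs_pos_eq by lra. lra.
Qed.

Lemma lim_RIntg (a : R) : 0 < a ->
  filterlim (fun d => RInt (g a) (Xf a d) (Xf a (1 - d))) (at_right 0) (locally (RInt (g a) 0 (x0 a))).
Proof.
  intros Ha. pose proof (x0_range a Ha).
  set (C := RInt (g a) 0 (x0 a)).
  set (e := fun d => RInt (g a) 0 (Xf a d) + RInt (g a) (Xf a (1 - d)) (x0 a)).
  assert (He : filterlim e (at_right 0) (locally 0)).
  { apply lim_squeeze0 with (fun d => Xf a d + (x0 a - Xf a (1 - d))).
    - apply (ev_small _ (1 / 2)). lra. intros d Hd.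
      pose proof (Xf_range a d Ha ltac:(lra)). pose proof (Xf_range a (1 - d) Ha ltac:(lra)).
      unfold e. eapply Rle_trans. apply Rabs_triang.
      apply Rplus_le_compat.
      + eapply Rle_trans. apply abs_RInt_le_const. lra. apply g_ex; lra.
        intros t Ht. apply g_abs; lra. lra.
      + eapply Rle_trans. apply abs_RInt_le_const. lra. apply g_ex; lra.
        intros t Ht. apply g_abs; lra. lra.
    - apply (lim_val _ (0 + (x0 a - x0 a))). ring.
      apply lim_plus. apply lim_X0; auto. apply lim_minus. apply lim_const. apply lim_X1; auto. }
  apply (lim_val _ (C - 0)). ring.
  eapply lim_ext; [| apply lim_minus; [apply lim_const| exact He]].
  apply (ev_small _ (1 / 2)). lra. intros d Hd.
  pose proof (Xf_range a d Ha ltac:(lra)). pose proof (Xf_range a (1 - d) Ha ltac:(lra)).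
  unfold e, C.
  assert (E1 := RInt_Chasles (g a) 0 (Xf a d) (Xf a (1 - d)) (g_ex a 0 (Xf a d) Ha ltac:(lra) ltac:(lra)) (g_ex a (Xf a d) (Xf a (1 - d)) Ha ltac:(lra) ltac:(lra))).
  assert (E2 := RInt_Chasles (g a) 0 (Xf a (1 - d)) (x0 a) (g_ex a 0 (Xf a (1 - d)) Ha ltac:(lra) ltac:(lra)) (g_ex a (Xf a (1 - d)) (x0 a) Ha ltac:(lra) ltac:(lra))).
  unfold plus in E1, E2; simpl in E1, E2. lra.
Qed.

Definition ck (a : R) (k : nat) : R := a + (a + 1) * INR k.
Definition jt (a : R) (k : nat) : R := 1 / ck a k - 1 / (ck a k + 2).
Definition wk (a : R) (k : nat) (u : R) : R := pw (ck a k) u / u * (1 - u ^ 2).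
Definition Ak (a : R) (k : nat) (u : R) : R := pw (ck a k) u / ck a k - pw (ck a k + 2) u / (ck a k + 2).

Lemma ck_pos (a : R) (k : nat) : 0 < a -> 0 < ck a k.
Proof. intros Ha. unfold ck. pose proof (pos_INR k). nra. Qed.

Lemma pw_plus (c d u : R) : pw (c + d) u = pw c u * pw d u.
Proof. unfold pw. rewrite <- exp_plus. f_equal. ring. Qed.

Lemma pw_ck (a : R) (k : nat) (u : R) : 0 < u -> pw (ck a k) u = pw a u * (u * pw a u) ^ k.
Proof.
  intros Hu. induction k as [|k IH].
  - unfold ck. simpl. rewrite Rmult_0_r, Rplus_0_r. ring.
  - unfold ck in *. rewrite S_INR.
    replace (a + (a + 1) * (INR k + 1)) with ((a + (a + 1) * INR k) + (a + 1)) by ring.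
    rewrite pw_plus, IH, pw_S by auto. simpl. ring.
Qed.

Lemma pw_2 (c u : R) : 0 < u -> pw (c + 2) u = pw c u * u ^ 2.
Proof.
  intros Hu. replace (c + 2) with ((c + 1) + 1) by ring. rewrite !pw_S by auto. simpl. ring.
Qed.

Lemma Ak_deriv (a : R) (k : nat) (u : R) : 0 < a -> 0 < u -> is_derive (Ak a k) u (wk a k u).
Proof.
  intros Ha Hu. pose proof (ck_pos a k Ha).
  unfold Ak, wk. 
  assert (E : forall t, 0 < t -> pw (ck a k + 2) t = pw (ck a k) t * t ^ 2) by (intros; apply pw_2; auto).
  apply is_derive_ext_loc with (fun t => pw (ck a k) t / ck a k - pw (ck a k) t * t ^ 2 / (ck a k + 2)).
  { apply filter_imp with (2 := locally_pos u Hu). intros t Ht. rewrite E by auto. reflexivity. }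
  unfold pw. auto_derive. auto. field. lra.
Qed.

Lemma wf_decomp (a u : R) (N : nat) : 0 < a -> 0 < u < 1 ->
  wf a u = sum_f_R0 (fun k => wk a k u) N + wf a u * (u * pw a u) ^ (S N).
Proof.
  intros Ha Hu. pose proof (den_pos a u Ha Hu).
  assert (Hk : forall k, wk a k u = wf a u * (1 - u * pw a u) * (u * pw a u) ^ k).
  { intros k. unfold wk, wf. rewrite pw_ck by lra. field. lra. }
  induction N as [|N IH].
  - simpl. rewrite Hk. simpl. ring.
  - rewrite tech5, Hk. rewrite IH at 1. simpl. ring.
Qed.

Lemma wk_cont (a : R) (k : nat) (u : R) : 0 < u -> continuous (wk a k) u.
Proof.
  intros Hu. apply (ex_derive_continuous (K:=R_AbsRing) (V:=R_NormedModule)). unfold wk, pw. auto_derive.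
  repeat split; lra.
Qed.

Lemma sum_wk_int (a d : R) (N : nat) : 0 < a -> 0 < d < 1 / 2 ->
  is_RInt (fun u => sum_f_R0 (fun k => wk a k u) N) d (1 - d)
          (sum_f_R0 (fun k => Ak a k (1 - d) - Ak a k d) N).
Proof.
  intros Ha Hd.
  assert (H1 : forall k, is_RInt (wk a k) d (1 - d) (Ak a k (1 - d) - Ak a k d)).
  { intros k. apply FTC. intros x Hx. apply Ak_deriv; auto. assert (0 < x < 1) by (eapply in_01; eauto). lra.
    intros x Hx. apply wk_cont. assert (0 < x < 1) by (eapply in_01; eauto). lra. }
  induction N as [|N IH].
  - simpl. apply H1.
  - eapply is_RInt_ext; [| apply (is_RInt_plus (V:=R_NormedModule) _ _ _ _ _ _ IH (H1 (S N)))].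
    intros x _. rewrite tech5. reflexivity.
Qed.

Definition remf (a : R) (N : nat) (u : R) : R := wf a u * (u * pw a u) ^ (S N).

Lemma remf_cont (a : R) (N : nat) (u : R) : 0 < a -> 0 < u < 1 -> continuous (remf a N) u.
Proof.
  intros Ha Hu. pose proof (den_pos a u Ha Hu).
  apply (ex_derive_continuous (K:=R_AbsRing) (V:=R_NormedModule)). unfold remf, wf, pw in *. auto_derive.
  repeat split; lra.
Qed.

Lemma remf_bound (a : R) (N : nat) (u : R) : 0 < a -> 0 < u < 1 ->
  0 <= remf a N u <= 2 * (pw (ck a (S N)) u / u).
Proof.
  intros Ha Hu. pose proof (den_pos a u Ha Hu). pose proof (pw_pos a u). pose proof (pw_lt1 a u Ha Hu).
  unfold remf, wf. rewrite pw_ck by lra. rewrite <- (tech_pow_Rmult (u * pw a u) N).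
  set (q := (u * pw a u) ^ N).
  assert (Hq : 0 <= q) by (unfold q; apply pow_le; nra).
  assert (Hr : (1 - u ^ 2) / (1 - u * pw a u) <= 2).
  { apply Rmult_le_reg_r with (1 - u * pw a u). auto.
    replace ((1 - u ^ 2) / (1 - u * pw a u) * (1 - u * pw a u)) with (1 - u ^ 2) by (field; lra). nra. }
  assert (Hr0 : 0 <= (1 - u ^ 2) / (1 - u * pw a u)) by (apply Rdiv_le_0_compat; nra).
  replace (pw a u / u * (1 - u ^ 2) / (1 - u * pw a u) * (u * pw a u * q))
    with ((pw a u / u * (u * pw a u * q)) * ((1 - u ^ 2) / (1 - u * pw a u))) by (field; lra).
  replace (2 * (pw a u * (u * pw a u * q) / u)) with ((pw a u / u * (u * pw a u * q)) * 2) by (field; lra).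
  assert (0 <= pw a u / u * (u * pw a u * q)).
  { apply Rmult_le_pos. apply Rdiv_le_0_compat; lra. apply Rmult_le_pos; nra. }
  split. apply Rmult_le_pos; auto. apply Rmult_le_compat_l; auto.
Qed.

Lemma rem_int_bound (a d : R) (N : nat) : 0 < a -> 0 < d < 1 / 2 ->
  0 <= RInt (remf a N) d (1 - d) <= 2 / ck a (S N).
Proof.
  intros Ha Hd. set (c := ck a (S N)). assert (Hc : 0 < c) by apply ck_pos, Ha.
  assert (Hex : ex_RInt (remf a N) d (1 - d)).
  { apply (ex_RInt_continuous (V:=R_CompleteNormedModule)). intros z Hz. apply remf_cont; auto. eapply in_01; eauto. }
  assert (Hi : is_RInt (fun u => 2 * (pw c u / u)) d (1 - d) (2 * pw c (1 - d) / c - 2 * pw c d / c)).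
  { apply (FTC (fun u => 2 * pw c u / c)).
    - intros x Hx. assert (0 < x < 1) by (eapply in_01; eauto). unfold pw. auto_derive. lra. field. lra.
    - intros x Hx. assert (0 < x < 1) by (eapply in_01; eauto).
      apply (ex_derive_continuous (K:=R_AbsRing) (V:=R_NormedModule)). unfold pw. auto_derive. lra. }
  split.
  - apply RInt_ge_0. lra. auto. intros x Hx. apply remf_bound; auto. lra.
  - eapply Rle_trans. apply RInt_le with (g := fun u => 2 * (pw c u / u)). lra. auto. eexists; exact Hi.
    intros x Hx. apply remf_bound; auto. lra.
    rewrite (is_RInt_unique _ _ _ _ Hi).
    assert (pw c (1 - d) <= 1) by (destruct (Req_EM_T c 0); [lra|]; apply Rlt_le, pw_lt1; lra).
    pose proof (pw_pos c d).
    unfold Rdiv. assert (0 < / c) by (apply Rinv_0_lt_compat; lra). nra.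
Qed.

Lemma wf_int_decomp (a d : R) (N : nat) : 0 < a -> 0 < d < 1 / 2 ->
  RInt (wf a) d (1 - d) = sum_f_R0 (fun k => Ak a k (1 - d) - Ak a k d) N + RInt (remf a N) d (1 - d).
Proof.
  intros Ha Hd.
  assert (Hex : ex_RInt (remf a N) d (1 - d)).
  { apply (ex_RInt_continuous (V:=R_CompleteNormedModule)). intros z Hz. apply remf_cont; auto. eapply in_01; eauto. }
  assert (H := is_RInt_plus (V:=R_NormedModule) _ _ _ _ _ _ (sum_wk_int a d N Ha Hd) (RInt_correct (V:=R_CompleteNormedModule) _ _ _ Hex)).
  apply is_RInt_unique. eapply is_RInt_ext; [| exact H].
  intros x Hx. assert (0 < x < 1) by (eapply in_01; eauto; lra).
  simpl. unfold plus; simpl. unfold remf. symmetry. apply wf_decomp; auto.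
Qed.

Lemma Ak_1 (a : R) (k : nat) : Ak a k 1 = jt a k.
Proof. unfold Ak, jt. rewrite !pw_1. reflexivity. Qed.

Lemma lim_Ak (a : R) (k : nat) : 0 < a ->
  filterlim (fun d => Ak a k (1 - d) - Ak a k d) (at_right 0) (locally (jt a k)).
Proof.
  intros Ha. pose proof (ck_pos a k Ha).
  apply (lim_val _ (jt a k - (0 / ck a k - 0 / (ck a k + 2)))). field. lra.
  apply lim_minus.
  - apply lim_1m. apply (ex_derive_continuous (K:=R_AbsRing) (V:=R_NormedModule)). unfold Ak, pw. auto_derive. lra.
    apply Ak_1.
  - unfold Ak. apply lim_minus; apply lim_div; try lra; try apply lim_const; apply lim_pw0; lra.
Qed.

Lemma lim_sumAk (a : R) (N : nat) : 0 < a ->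
  filterlim (fun d => sum_f_R0 (fun k => Ak a k (1 - d) - Ak a k d) N) (at_right 0) (locally (sum_f_R0 (jt a) N)).
Proof.
  intros Ha. induction N as [|N IH].
  - simpl. apply lim_Ak; auto.
  - simpl. apply lim_plus; auto. apply lim_Ak; auto.
Qed.

Lemma I_lim (a J : R) : 0 < a -> is_series (jt a) J ->
  filterlim (fun d => RInt (wf a) d (1 - d)) (at_right 0) (locally J).
Proof.
  intros Ha HJ. apply filterlim_locally. intros eps.
  assert (He3 : 0 < eps / 3) by (destruct eps; simpl; lra).
  destruct (proj1 (filterlim_locally (sum_n (jt a)) J) HJ (mkposreal _ He3)) as [N0 HN0].
  destruct (archimed (6 / eps)) as [Hu _].
  set (N1 := Z.to_nat (Z.abs (up (6 / eps)))).
  assert (HN1 : 6 / eps <= INR N1).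
  { unfold N1. rewrite INR_IZR_INZ, Z2Nat.id by apply Z.abs_nonneg.
    rewrite abs_IZR. pose proof (Rle_abs (IZR (up (6 / eps)))). lra. }
  set (N := Nat.max N0 N1).
  assert (HN : 2 / ck a (S N) < eps / 3).
  { assert (INR N1 <= INR N) by (apply le_INR; lia).
    assert (Hck : INR N + 1 < ck a (S N)) by (unfold ck; rewrite S_INR; pose proof (pos_INR N); nra).
    assert (Hp : 0 < eps) by (destruct eps; simpl; lra).
    assert (6 / eps < ck a (S N)) by lra.
    apply Rmult_lt_reg_r with (ck a (S N) * 3 / eps). 
    { apply Rmult_lt_0_compat. pose proof (ck_pos a (S N) Ha). lra. apply Rinv_0_lt_compat; lra. }
    replace (2 / ck a (S N) * (ck a (S N) * 3 / eps)) with (6 / eps) by (field; split; [lra| pose proof (ck_pos a (S N) Ha); lra]).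
    replace (eps / 3 * (ck a (S N) * 3 / eps)) with (ck a (S N)) by (field; lra). lra. }
  assert (HS : Rabs (sum_f_R0 (jt a) N - J) < eps / 3).
  { assert (Hb := HN0 N ltac:(unfold N; lia)). rewrite <- sum_n_Reals. apply ball_R in Hb. exact Hb. }
  assert (HL := proj1 (filterlim_locally _ _) (lim_sumAk a N Ha) (mkposreal _ He3)).
  eapply filter_imp; [| apply filter_and; [exact HL| apply (ev_small (fun d => 0 < d < 1 / 2) (1 / 2)); [lra| auto]]].
  intros d [H1 H2]. simpl in H1.
  assert (H3 : Rabs (sum_f_R0 (fun k => Ak a k (1 - d) - Ak a k d) N - sum_f_R0 (jt a) N) < eps / 3) by (apply ball_R; exact H1).
  apply ball_R. rewrite (wf_int_decomp a d N Ha H2).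
  pose proof (rem_int_bound a d N Ha H2).
  apply Rabs_def2 in H3. apply Rabs_def2 in HS. apply Rabs_def1; destruct eps; simpl in *; lra.
Qed.

Lemma zb_range (a : R) : 0 < a -> 0 < 1 / (a + 1) < 1.
Proof.
  intros Ha. split. apply Rdiv_lt_0_compat; lra.
  apply Rmult_lt_reg_r with (a + 1); [lra|]. unfold Rdiv. rewrite Rmult_assoc, Rinv_l by lra. lra.
Qed.

Lemma ta_term (a : R) (n : nat) : 0 < a ->
  term a (S n) = - (a / (2 * (a + 1) ^ 2)) * ta (1 / (a + 1)) n.
Proof.
  intros Ha. rewrite term_eq by auto. unfold ta. rewrite S_INR.
  pose proof (pos_INR n). pose proof (zb_range a Ha).
  assert (H1 : (a + 1) ^ 2 * (INR n + 1) ^ 2 - 1 <> 0) by nra.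
  assert (H2 : (1 / (a + 1)) ^ 2 - (INR n + 1) ^ 2 <> 0) by nra.
  field. repeat split; try lra; auto.
Qed.

Definition Sval (a : R) : R := a / (2 * (a + 1)) - a * PI / (2 * (a + 1) ^ 2) * cot (PI / (a + 1)).

Lemma term_series (a : R) : 0 < a -> is_series (fun n => term a (S n)) (Sval a).
Proof.
  intros Ha. pose proof (zb_range a Ha) as Hz.
  set (k := - (a / (2 * (a + 1) ^ 2))). set (z := 1 / (a + 1)).
  assert (Hc := cot_series z Hz).
  assert (H' : is_series (fun n => k * ta z n) (k * (PI * cot (PI * z) - 1 / z))).
  { exact (is_series_scal_l k _ _ Hc). }
  replace (Sval a) with (k * (PI * cot (PI * z) - 1 / z)).
  eapply is_series_ext; [| exact H']. intros n. simpl. rewrite ta_term by auto. reflexivity.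
  unfold Sval, k, z. replace (PI * (1 / (a + 1))) with (PI / (a + 1)) by (field; lra).
  field. lra.
Qed.

Lemma jt_term (a : R) (k : nat) : 0 < a -> jt a k = 2 * (a + 1) / a * term a (S k).
Proof.
  intros Ha. rewrite term_eq by auto. unfold jt, ck. rewrite S_INR. pose proof (pos_INR k).
  assert (0 < a + (a + 1) * INR k) by nra.
  assert (H1 : (a + 1) ^ 2 * (INR k + 1) ^ 2 - 1 <> 0) by nra.
  field. repeat split; try lra; auto.
Qed.

Lemma jt_series (a : R) : 0 < a -> is_series (jt a) (2 * (a + 1) / a * Sval a).
Proof.
  intros Ha. assert (H := is_series_scal_l (2 * (a + 1) / a) _ _ (term_series a Ha)).
  eapply is_series_ext; [| exact H]. intros n. simpl. rewrite jt_term by auto. reflexivity.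
Qed.

Lemma RIntg_x0 (a : R) : 0 < a -> RInt (g a) 0 (x0 a) = 1 / 2 + x0 a ^ 2 / 2 - Sval a.
Proof.
  intros Ha.
  set (c := 1 / 2 - 1 / (a + 1)). set (k := a / (2 * (a + 1))).
  set (J := 2 * (a + 1) / a * Sval a).
  assert (L1 := lim_RIntg a Ha).
  assert (L2 : filterlim (fun d => RInt (g a) (Xf a d) (Xf a (1 - d))) (at_right 0)
                 (locally (c * (1 - 2 * 0) + (x0 a ^ 2 / 2 - - 1 / (a + 1)) - k * J))).
  { eapply lim_ext; [| apply lim_minus; [apply lim_plus|]].
    - apply (ev_small _ (1 / 2)). lra. intros d Hd. symmetry. apply key_int; auto.
    - apply lim_mult. apply lim_const. apply lim_minus. apply lim_const. apply lim_mult. apply lim_const. apply lim_id0.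
    - apply lim_minus. apply lim_F1; auto. apply lim_F0; auto.
    - apply lim_mult. apply lim_const. apply I_lim; auto. apply jt_series; auto. }
  assert (E := filterlim_locally_unique (F := at_right 0) _ _ _ L1 L2).
  assert (E' : RInt (g a) 0 (x0 a) = c * (1 - 2 * 0) + (x0 a ^ 2 / 2 - - 1 / (a + 1)) - k * J) by exact E.
  assert (Hf : c * (1 - 2 * 0) + (x0 a ^ 2 / 2 - - 1 / (a + 1)) - k * J = 1 / 2 + x0 a ^ 2 / 2 - Sval a :> R).
  { unfold c, k, J. field. lra. }
  rewrite E'. exact Hf.
Qed.

Lemma int_x0_1 (a : R) : 0 < a -> is_RInt (g a) (x0 a) 1 ((1 - x0 a ^ 2) / 2).
Proof.
  intros Ha. pose proof (x0_range a Ha).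
  apply is_RInt_ext with (fun t => t).
  { intros x Hx. rewrite Rmin_left, Rmax_right in Hx by lra. symmetry. apply g_id; auto. lra. }
  replace ((1 - x0 a ^ 2) / 2) with (1 ^ 2 / 2 - x0 a ^ 2 / 2) by field.
  apply (FTC (fun t => t ^ 2 / 2)). intros x _. auto_derive. auto. field.
  intros x _. apply (ex_derive_continuous (K:=R_AbsRing) (V:=R_NormedModule)). auto_derive. auto.
Qed.

Lemma cot_comp (a : R) : 0 < a -> cot (a * PI / (a + 1)) = - cot (PI / (a + 1)).
Proof.
  intros Ha. replace (a * PI / (a + 1)) with (PI - PI / (a + 1)) by (field; lra).
  unfold cot. rewrite sin_PI_x. 
  replace (cos (PI - PI / (a + 1))) with (- cos (PI / (a + 1))).
  unfold Rdiv. ring.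
  rewrite cos_minus, cos_PI, sin_PI. ring.
Qed.

Theorem mainTheorem7 (a : R) (ha : 0 < a) :
  ex_series (fun n : nat => term a (S n)) /\
  is_RInt (g a) 0 1 (1 - Series (fun n : nat => term a (S n))) /\
  1 - Series (fun n : nat => term a (S n)) =
    1 - a / (2 * (a + 1)) - a * PI / (2 * (a + 1) ^ 2) * cot (a * PI / (a + 1)).
Proof.
  assert (HS := term_series a ha).
  rewrite (is_series_unique _ _ HS).
  split; [exists (Sval a); exact HS|]. split.
  - pose proof (x0_range a ha).
    assert (H1 := RInt_correct (V:=R_CompleteNormedModule) _ _ _ (g_ex a 0 (x0 a) ha ltac:(lra) ltac:(lra))).
    assert (HC := is_RInt_Chasles (V:=R_NormedModule) _ _ _ _ _ _ H1 (int_x0_1 a ha)).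
    rewrite RIntg_x0 in HC by auto. unfold plus in HC; simpl in HC.
    replace (1 - Sval a) with (1 / 2 + x0 a ^ 2 / 2 - Sval a + (1 - x0 a ^ 2) / 2) by field. exact HC.
  - unfold Sval. rewrite cot_comp by auto. ring.
Qed.
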